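(* Let $n \geq 0$ and $k \geq 1$ be integers. Let $\mathcal{H}$ be a separable infinite-dimensional complex Hilbert space with orthonormal basis $\{e_m\}_{m\geq 1}$. For $j\ge 0$ let $P_j$ be the orthogonal projection onto $\mathrm{span}\{e_1,\dots,e_j\}$ (with $P_0=0$), and let $S_k$ be the unilateral shift of multiplicity $k$, $S_k e_m = e_{m+k}$ for $m\geq 1$. Fix scalars $x^i_j\in\mathbb{C}$ for $1\le i\le n$, $1\le j\le n+k$, and define the finite rank operator $F$ by $$F(e_i)=x_1^ie_1+\cdots+x_{i+k-1}^ie_{i+k-1}+(x_{i+k}^i-1)e_{i+k}+x_{i+k+1}^ie_{i+k+1}+\cdots+x_{n+k}^ie_{n+k}\ \ (1\le i\le n),\qquad F(e_i)=0\ \ (i\geq n+1).$$ Set $F_1=F+S_kP_n$ and, for $r\geq 2$, $F_r=F_1^r+\sum_{j=1}^{r-1}S_k^{j}(I-P_n)F_1^{r-j}$. Let $T=S_k+F$, and assume that $T$ is a completely non-unitary contraction with finite-dimensional defect spaces such that $\mathcal{D}_T\subseteq\mathcal{D}_{T^*}$, $\dim\mathcal{D}_T=n$ and $\dim(\mathcal{D}_{T^*}\ominus\mathcal{D}_T)=k$. Then: (1) $\mathrm{rank}(P_n-F_1^*F_1)=n$; (2) $F_1(I-P_n)=(I-P_{n+k})F_1=0$; (3) there exists $\lambda\geq 0$ such that $\lambda\|F_1^*x\|^2-\|F_1x\|^2\leq \lambda \|P_{n+k} x\|^2-\|P_n x\|^2$ for all $x\in \mathcal{H}$; (4) for all $r\geq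 1$ and all $x\in\mathcal{H}$, $\|F_rx\|\leq \|P_n x\|$ and $\|F_r^*x\|\leq \|P_{n+kr}x\|$; moreover, the only $x\in\mathcal{H}$ satisfying $\|F_rx\|=\|P_nx\|$ and $\|F_r^*x\|=\|P_{n+kr}x\|$ for all $r\geq 1$ is $x=0$.
   Context: For a contraction $T$ (i.e. $\|T\|\le 1$) on a Hilbert space $\mathcal{H}$, the defect operators are $D_T=(I-T^*T)^{1/2}$ and $D_{T^*}=(I-TT^* )^{1/2}$, and the defect spaces are $\mathcal{D}_T=\overline{D_T\mathcal{H}}$ and $\mathcal{D}_{T^*}=\overline{D_{T^*}\mathcal{H}}$. A contraction $T$ is completely non-unitary (c.n.u.) if there is no nonzero closed subspace $\mathcal{M}$ reducing $T$ such that $T|_{\mathcal{M}}$ is unitary. *)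

(* Defs.v *)
(* The separable infinite-dimensional Hilbert space H is modelled concretely
   as l^2(N, C): vectors are sequences u : nat -> C with sum |u p|^2 < oo.
   Coordinate p (0-based) is the coefficient of the paper's basis vector
   e_(p+1). Operators are maps vec -> vec; only their behaviour on l^2
   vectors matters. *)
From Stdlib Require Import Reals ClassicalEpsilon Arith.
From Coquelicot Require Import Coquelicot.

Definition vec := nat -> C.
Definition op := vec -> vec.

Definition vzero : vec := fun _ => RtoC 0.
Definition vadd (u v : vec) : vec := fun p => Cplus (u p) (v p).
Definition vsub (u v : vec) : vec := fun p => Cminus (u p) (v p).
Definition vscal (c : C) (u : vec) : vec := fun p => Cmult c (u p).

Fixpoint csum (n : nat) (f : nat -> C) : C :=
  match n with O => RtoC 0 | S m => Cplus (csum m f) (f m) end.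
Definition vsum (n : nat) (f : nat -> vec) : vec := fun p => csum n (fun i => f i p).

Definition l2 (u : vec) : Prop := ex_series (fun p => (Cmod (u p) ^ 2)%R).
Definition hnorm (u : vec) : R := sqrt (Series (fun p => (Cmod (u p) ^ 2)%R)).
Definition inner (u v : vec) : C :=
  (Series (fun p => Re (Cmult (u p) (Cconj (v p)))),
   Series (fun p => Im (Cmult (u p) (Cconj (v p))))).

Definition lin_on_l2 (A : op) : Prop :=
  forall (a b : C) u v, l2 u -> l2 v ->
    A (vadd (vscal a u) (vscal b v)) = vadd (vscal a (A u)) (vscal b (A v)).

Definition is_adjoint (A B : op) : Prop :=
  (forall u, l2 u -> l2 (B u)) /\
  (forall u v, l2 u -> l2 v -> inner (A u) v = inner u (B v)).
Definition adj (A : op) : op := epsilon (inhabits (fun u => u)) (is_adjoint A).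

Definition is_pos_sqrt (A D : op) : Prop :=
  (forall u, l2 u -> l2 (D u)) /\ lin_on_l2 D /\
  (exists M : R, forall u, l2 u -> (hnorm (D u) <= M * hnorm u)%R) /\
  (forall u v, l2 u -> l2 v -> inner (D u) v = inner u (D v)) /\
  (forall u, l2 u -> (0 <= Re (inner (D u) u))%R) /\
  (forall u, l2 u -> D (D u) = A u).
Definition sqrt_op (A : op) : op := epsilon (inhabits (fun u => u)) (is_pos_sqrt A).

Definition range (A : op) : vec -> Prop := fun y => exists u, l2 u /\ y = A u.
Definition closure (S : vec -> Prop) : vec -> Prop := fun x =>
  l2 x /\ forall eps : R, (0 < eps)%R -> exists y, S y /\ (hnorm (vsub x y) < eps)%R.
Definition subsp (M N : vec -> Prop) : Prop := forall x, M x -> N x.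
Definition ominus (M N : vec -> Prop) : vec -> Prop := fun x =>
  M x /\ forall y, N y -> inner x y = RtoC 0.

Definition has_dim (M : vec -> Prop) (d : nat) : Prop :=
  exists v : nat -> vec,
    (forall i, (i < d)%nat -> M (v i)) /\
    (forall c : nat -> C, vsum d (fun i => vscal (c i) (v i)) = vzero ->
       forall i, (i < d)%nat -> c i = RtoC 0) /\
    (forall x, M x -> exists c : nat -> C, x = vsum d (fun i => vscal (c i) (v i))).

Definition closed_subspace (M : vec -> Prop) : Prop :=
  (forall x, M x -> l2 x) /\ M vzero /\
  (forall x y, M x -> M y -> M (vadd x y)) /\
  (forall c x, M x -> M (vscal c x)) /\
  (forall x, closure M x -> M x).

Definition contraction (T : op) : Prop :=
  (forall u, l2 u -> l2 (T u)) /\ lin_on_l2 T /\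
  (forall u, l2 u -> (hnorm (T u) <= hnorm u)%R).
Definition defect_op (T : op) : op := sqrt_op (fun u => vsub u (adj T (T u))).
Definition defect_op_star (T : op) : op := sqrt_op (fun u => vsub u (T (adj T u))).
Definition defect_sp (T : op) : vec -> Prop := closure (range (defect_op T)).
Definition defect_sp_star (T : op) : vec -> Prop := closure (range (defect_op_star T)).

Definition reducing_unitary (T : op) (M : vec -> Prop) : Prop :=
  (forall x, M x -> M (T x) /\ M (adj T x)) /\
  (forall x, M x -> adj T (T x) = x /\ T (adj T x) = x).
Definition cnu (T : op) : Prop :=
  forall M, closed_subspace M -> reducing_unitary T M -> forall x, M x -> x = vzero.

Definition Pj (j : nat) : op := fun u p => if Nat.ltb p j then u p else RtoC 0.
Definition Sk (k : nat) : op := fun u p => if Nat.ltb p k then RtoC 0 else u (p - k)%nat.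
(* X i j = x^i_j (1-based indices, 1 <= i <= n, 1 <= j <= n+k);
   F e_i = sum_j x^i_j e_j - e_(i+k) for 1 <= i <= n, F e_i = 0 for i > n *)
Definition Fop (n k : nat) (X : nat -> nat -> C) : op := fun u p =>
  if Nat.ltb p (n + k) then
    csum n (fun i => Cmult (u i)
      (Cminus (X (S i) (S p)) (if Nat.eqb p (i + k) then RtoC 1 else RtoC 0)))
  else RtoC 0.
Definition F1op (n k : nat) X : op := fun u => vadd (Fop n k X u) (Sk k (Pj n u)).
Definition Frop (n k : nat) X (r : nat) : op := fun u =>
  vadd (Nat.iter r (F1op n k X) u)
       (vsum (r - 1) (fun j' =>
          Nat.iter (S j') (Sk k)
            (vsub (Nat.iter (r - S j') (F1op n k X) u)
                  (Pj n (Nat.iter (r - S j') (F1op n k X) u))))).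
Definition Top (n k : nat) X : op := fun u => vadd (Sk k u) (Fop n k X u).

(* Main.v *)
Require Import Defs.
From Stdlib Require Import Reals ClassicalEpsilon Classical Arith Lia Lra FunctionalExtensionality.
From Coquelicot Require Import Coquelicot.

Fixpoint rsum (n : nat) (f : nat -> R) : R :=
  match n with O => 0%R | S m => (rsum m f + f m)%R end.

Definition Qf (N : nat) (g : nat -> nat -> C) (u : vec) : C :=
  csum N (fun p => Cmult (csum N (fun q => Cmult (g p q) (u q))) (Cconj (u p))).
Definition herm (N : nat) (g : nat -> nat -> C) : Prop :=
  forall p q, (p < N)%nat -> (q < N)%nat -> g q p = Cconj (g p q).

Section CS.
Local Open Scope C_scope.

Lemma csum_ext n (f g : nat -> C) : (forall i, (i < n)%nat -> f i = g i) -> csum n f = csum n g.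
Proof. induction n; simpl; intros H; auto. rewrite IHn by (intros; apply H; lia). rewrite H by lia. auto. Qed.

Lemma csum_plus n (f g : nat -> C) : csum n (fun i => f i + g i) = csum n f + csum n g.
Proof. induction n; simpl. ring. rewrite IHn. ring. Qed.

Lemma csum_opp n (f : nat -> C) : csum n (fun i => - f i) = - csum n f.
Proof. induction n; simpl. ring. rewrite IHn. ring. Qed.

Lemma csum_minus n (f g : nat -> C) : csum n (fun i => f i - g i) = csum n f - csum n g.
Proof. induction n; simpl. ring. rewrite IHn. ring. Qed.

Lemma csum_scal_l n (c : C) (f : nat -> C) : csum n (fun i => c * f i) = c * csum n f.
Proof. induction n; simpl. ring. rewrite IHn. ring. Qed.

Lemma csum_scal_r n (c : C) (f : nat -> C) : csum n (fun i => f i * c) = csum n f * c.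
Proof. induction n; simpl. ring. rewrite IHn. ring. Qed.

Lemma csum_zero n (f : nat -> C) : (forall i, (i < n)%nat -> f i = 0) -> csum n f = 0.
Proof. induction n; simpl; intros H; auto. rewrite IHn by (intros; apply H; lia). rewrite H by lia. ring. Qed.

Lemma csum_swap n m (f : nat -> nat -> C) :
  csum n (fun i => csum m (fun j => f i j)) = csum m (fun j => csum n (fun i => f i j)).
Proof.
induction n; simpl. symmetry; apply csum_zero; auto.
rewrite IHn. rewrite <- (csum_plus m (fun j => csum n (fun i => f i j)) (fun j => f n j)). reflexivity.
Qed.

Lemma csum_split a b (f : nat -> C) : csum (a + b) f = csum a f + csum b (fun i => f (a + i)%nat).
Proof.
induction b; simpl. rewrite Nat.add_0_r. ring.
rewrite Nat.add_succ_r. simpl. rewrite IHb. ring.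
Qed.

Lemma csum_conj n (f : nat -> C) : Cconj (csum n f) = csum n (fun i => Cconj (f i)).
Proof. induction n; simpl. apply injective_projections; simpl; lra.
rewrite Cplus_conj, IHn. auto. Qed.

Lemma csum_delta n p (a : nat -> C) : (p < n)%nat ->
  csum n (fun q => if Nat.eqb q p then a q else 0) = a p.
Proof.
induction n; intros H; simpl. lia.
destruct (Nat.eq_dec p n).
- subst. rewrite Nat.eqb_refl. rewrite csum_zero. ring.
  intros i Hi. destruct (Nat.eqb_spec i n); auto; lia.
- rewrite IHn by lia. destruct (Nat.eqb_spec n p). lia. ring.
Qed.

Lemma re_csum n (f : nat -> C) : fst (csum n f) = rsum n (fun i => fst (f i)).
Proof. induction n; simpl; auto. rewrite IHn; auto. Qed.
Lemma im_csum n (f : nat -> C) : snd (csum n f) = rsum n (fun i => snd (f i)).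
Proof. induction n; simpl; auto. rewrite IHn; auto. Qed.

End CS.

Section RS.
Local Open Scope R_scope.
Lemma rsum_ext n f g : (forall i, (i < n)%nat -> f i = g i) -> rsum n f = rsum n g.
Proof. induction n; simpl; intros H; auto. rewrite IHn by (intros; apply H; lia). rewrite H by lia. auto. Qed.
Lemma rsum_nonneg n f : (forall i, (i < n)%nat -> 0 <= f i) -> 0 <= rsum n f.
Proof. induction n; simpl; intros H. lra. assert (0 <= f n) by (apply H; lia).
assert (0 <= rsum n f) by (apply IHn; intros; apply H; lia). lra. Qed.
Lemma rsum_le n f g : (forall i, (i < n)%nat -> f i <= g i) -> rsum n f <= rsum n g.
Proof. induction n; simpl; intros H. lra. assert (f n <= g n) by (apply H; lia).
assert (rsum n f <= rsum n g) by (apply IHn; intros; apply H; lia). lra. Qed.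
Lemma rsum_split a b f : rsum (a + b) f = rsum a f + rsum b (fun i => f (a + i)%nat).
Proof. induction b; simpl. rewrite Nat.add_0_r. ring.
rewrite Nat.add_succ_r. simpl. rewrite IHb. ring. Qed.
Lemma rsum_zero n f : (forall i, (i < n)%nat -> f i = 0) -> rsum n f = 0.
Proof. induction n; simpl; intros H; auto. rewrite IHn by (intros; apply H; lia). rewrite H by lia. ring. Qed.
Lemma rsum_plus n f g : rsum n (fun i => f i + g i) = rsum n f + rsum n g.
Proof. induction n; simpl. ring. rewrite IHn. ring. Qed.
Lemma rsum_scal n c f : rsum n (fun i => c * f i) = c * rsum n f.
Proof. induction n; simpl. ring. rewrite IHn. ring. Qed.
Lemma rsum_term n f i : (forall j, (j < n)%nat -> 0 <= f j) -> (i < n)%nat -> f i <= rsum n f.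
Proof.
induction n; intros H Hi; simpl. lia.
assert (0 <= rsum n f) by (apply rsum_nonneg; intros; apply H; lia).
destruct (Nat.eq_dec i n). subst. lra.
assert (f i <= rsum n f) by (apply IHn; [intros; apply H; lia | lia]).
assert (0 <= f n) by (apply H; lia). lra.
Qed.
Lemma rsum_mono n m f : (n <= m)%nat -> (forall j, 0 <= f j) -> rsum n f <= rsum m f.
Proof.
intros H Hf. replace m with (n + (m - n))%nat by lia. rewrite rsum_split.
assert (0 <= rsum (m - n) (fun i => f (n + i)%nat)) by (apply rsum_nonneg; auto). lra.
Qed.
End RS.

Module MC.
From mathcomp Require Import all_boot all_order all_algebra.
From mathcomp Require Import complex Rstruct.
Import GRing.Theory Num.Theory Order.TTheory.
Local Open Scope ring_scope.
Local Open Scope sesquilinear_scope.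
Local Set Implicit Arguments.
Local Unset Strict Implicit.
Notation K := (complex Rdefinitions.R).

Lemma test (x : K) : x^* = conjc x.
Proof. reflexivity. Qed.

Lemma dep_mx N (W : 'M[K]_(N.+1, N)) : exists2 c : 'rV_(N.+1), c != 0 & c *m W = 0.
Proof.
exists (nz_row (kermx W)).
  rewrite nz_row_eq0 -mxrank_eq0 mxrank_ker.
  have := rank_leq_col W. rewrite -subn_eq0. move/eqP => h. 
  by rewrite subn_eq0 -ltnNge ltnS rank_leq_col.
by apply/sub_kermxP; apply: nz_row_sub.
Qed.

Lemma quad_diag N (v : 'rV[K]_N) (d : 'rV[K]_N) :
  (v *m diag_mx d *m v ^t*) 0 0 = \sum_j v 0 j * d 0 j * (v 0 j)^*.
Proof.
rewrite mul_mx_diag !mxE; apply: eq_bigr => j _; rewrite !mxE //.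
Qed.

Lemma quad_delta N (d : 'rV[K]_N) (j : 'I_N) :
  ((delta_mx 0 j : 'rV_N) *m diag_mx d *m (delta_mx 0 j : 'rV_N) ^t*) 0 0 = d 0 j.
Proof.
rewrite quad_diag (bigD1 j) //= big1 ?addr0.
  by rewrite !mxE !eqxx /= mul1r conjC1 mulr1.
by move=> i /negbTE hij; rewrite !mxE hij /= !mul0r.
Qed.

Lemma spec_decomp N (A : 'M[K]_N) : A ^t* = A ->
  exists P : 'M[K]_N, exists d : 'rV[K]_N,
    [/\ P *m P ^t* = 1%:M, P ^t* *m P = 1%:M & A = P ^t* *m diag_mx d *m P].
Proof.
move=> hA.
have nA : A \is normalmx by apply/normalmxP; rewrite hA.
have /orthomx_spectralP eqA := nA.
exists (spectralmx A), (spectral_diag A).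
have U := spectral_unitarymx A.
have h1 : spectralmx A *m (spectralmx A) ^t* = 1%:M by apply/unitarymxP.
split => //; first by apply: mulmx1C.
by rewrite -invmx_unitary.
Qed.

Lemma quad_conj N (A P : 'M[K]_N) (u : 'rV[K]_N) :
  (u *m (P ^t* *m A *m P) *m u ^t*) = (u *m P ^t*) *m A *m (u *m P ^t*) ^t*.
Proof.
by rewrite trmx_mul map_mxM trmxCK !mulmxA.
Qed.

Lemma sqrt_mx N (A : 'M[K]_N) : A ^t* = A ->
  (forall u : 'rV_N, 0 <= (u *m A *m u ^t*) 0 0) ->
  exists Q : 'M[K]_N, [/\ Q ^t* = Q, (forall u : 'rV_N, 0 <= (u *m Q *m u ^t*) 0 0)
     & Q *m Q = A].
Proof.
move=> hA hpsd.
have [P [d [h1 h2 eA]]] := spec_decomp hA.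
have dge0 : forall j, 0 <= d 0 j.
  move=> j; have := hpsd ((delta_mx 0 j : 'rV_N) *m P).
  by rewrite eA quad_conj !mulmxtVK ?quad_delta //; apply/unitarymxP.
pose s : 'rV[K]_N := \row_j sqrtC (d 0 j).
have sge0 : forall j, 0 <= s 0 j by move=> j; rewrite mxE sqrtC_ge0.
exists (P ^t* *m diag_mx s *m P); split.
- rewrite !trmx_mul !map_mxM trmxCK tr_diag_mx mulmxA; congr (_ *m _ *m _).
  apply/matrixP => i j; rewrite !mxE.
  case: (i == j); rewrite /= ?mulr1n ?mulr0n.
    by rewrite geC0_conj // sqrtC_ge0.
  by rewrite conjC0.
- move=> u; rewrite quad_conj quad_diag; apply: sumr_ge0 => j _.
  by rewrite mulrAC mulr_ge0 // mul_conjC_ge0.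
- have U : P \is unitarymx by apply/unitarymxP.
  rewrite eA !mulmxA mulmxtVK // -(mulmxA (P ^t*) (diag_mx s)) mulmx_diag.
  congr (_ *m _ *m _); congr (diag_mx _).
  by apply/rowP => j; rewrite !mxE -expr2 sqrtCK.
Qed.

Lemma pd_mx N (A : 'M[K]_N) : A ^t* = A ->
  (forall u : 'rV_N, 0 <= (u *m A *m u ^t*) 0 0) ->
  (forall u : 'rV_N, (u *m A *m u ^t*) 0 0 = 0 -> u = 0) ->
  exists2 c : K, 0 < c &
    forall u : 'rV_N, c * (u *m u ^t*) 0 0 <= (u *m A *m u ^t*) 0 0.
Proof.
move=> hA hpsd hdef.
have [P [d [h1 h2 eA]]] := spec_decomp hA.
have dgt0 : forall j, 0 < d 0 j.
  move=> j; have := hpsd ((delta_mx 0 j : 'rV_N) *m P).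
  have := hdef ((delta_mx 0 j : 'rV_N) *m P).
  have U : P \is unitarymx by apply/unitarymxP.
  rewrite eA quad_conj !mulmxtVK ?quad_delta // => hd hd0.
  rewrite lt_def hd0 andbT; apply/negP => /eqP hz.
  have := hd hz => /(congr1 (fun x => x *m P ^t*)).
  rewrite -mulmxA h1 mulmx1 mul0mx => /matrixP /(_ 0 j); rewrite !mxE !eqxx /=.
  by move/eqP; rewrite oner_eq0.
pose c : K := (1 + \sum_j (d 0 j)^-1)^-1.
have Sge0 : 0 <= \sum_j (d 0 j)^-1.
  by apply: sumr_ge0 => j _; rewrite invr_ge0 ltW.
have cgt0 : 0 < c by rewrite invr_gt0 ltr_pwDl.
exists c => // u.
have -> : (u *m u ^t*) = (u *m P ^t*) *m 1%:M *m (u *m P ^t*) ^t*.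
  by rewrite mulmx1 trmx_mul map_mxM trmxCK mulmxA -(mulmxA u) h2 mulmx1.
rewrite eA quad_conj -diag_const_mx quad_diag quad_diag mulr_sumr.
apply: ler_sum => j _; rewrite !mxE /=.
set a := \sum_(j0 < N) _.
rewrite mulr1 (mulrAC a) [_ * d 0 j]mulrC.
apply: ler_wpM2r; first exact: mul_conjC_ge0.
rewrite /c -[d 0 j]invrK lef_pV2 ?posrE ?invr_gt0 ?ltr_pwDl ?dgt0 //.
apply: ler_wpDl => //.
rewrite (bigD1 j) //= ler_wpDr //.
by apply: sumr_ge0 => i _; rewrite invr_ge0 ltW.
Qed.

Definition ofC (c : C) : K := Complex (fst c) (snd c).
Definition toC (z : K) : C := (complex.Re z, complex.Im z).

Lemma ofC_add a b : ofC (Cplus a b) = ofC a + ofC b. Proof. by []. Qed.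
Lemma ofC_mul a b : ofC (Cmult a b) = ofC a * ofC b. Proof. by []. Qed.
Lemma ofC_conj a : ofC (Cconj a) = (ofC a)^*. Proof. by []. Qed.
Lemma ofC_0 : ofC (RtoC 0) = 0. Proof. by []. Qed.
Lemma ofC_1 : ofC (RtoC 1) = 1. Proof. by []. Qed.
Lemma ofCK c : toC (ofC c) = c. Proof. by case: c. Qed.
Lemma toCK z : ofC (toC z) = z. Proof. by case: z. Qed.
Lemma ofC_inj a b : ofC a = ofC b -> a = b.
Proof. by move=> h; rewrite -(ofCK a) h ofCK. Qed.

Lemma ofC_csum n f : ofC (csum n f) = \sum_(i < n) ofC (f i).
Proof.
elim: n => [|n IH] /=; first by rewrite big_ord0.
by rewrite ofC_add IH big_ord_recr.
Qed.

Definition ext N (f : 'I_N -> K) (p : nat) : K :=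
  if @insub nat (fun x => (x < N)%N) 'I_N p is Some i then f i else 0.
Lemma ext_val N (f : 'I_N -> K) (i : 'I_N) : ext f i = f i.
Proof. by rewrite /ext valK. Qed.

Definition mxg N (g : nat -> nat -> C) : 'M[K]_N := \matrix_(i < N, j < N) ofC (g i j).
Definition rowc N (u : nat -> C) : 'rV[K]_N := \row_(j < N) ofC (Cconj (u j)).

Lemma Qf_mx N g u : ofC (Qf N g u) = (rowc N u *m mxg N g *m (rowc N u)^t*) 0 0.
Proof.
rewrite /Qf ofC_csum !mxE.
under eq_bigr do rewrite ofC_mul ofC_csum mulr_suml.
under [RHS]eq_bigr do rewrite !mxE mulr_suml.
rewrite exchange_big; apply: eq_bigr => p _; apply: eq_bigr => q _.
rewrite !mxE ofC_mul !ofC_conj conjCK.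
by rewrite mulrC mulrA.
Qed.

Lemma herm_mx N g : herm N g -> (mxg N g)^t* = mxg N g.
Proof.
move=> H; apply/matrixP => i j; rewrite !mxE -ofC_conj -H //; apply/ssrnat.ltP; exact: ltn_ord.
Qed.

Lemma ct00 (M : 'M[K]_1) : (M ^t*) 0 0 = (M 0 0)^*.
Proof. by rewrite !mxE. Qed.

Lemma quad_real N (A : 'M[K]_N) (r : 'rV[K]_N) : A^t* = A ->
  ((r *m A *m r^t*) 0 0)^* = (r *m A *m r^t*) 0 0.
Proof.
move=> hA.
have e : (r *m A *m r^t*)^t* = r *m A *m r^t*.
  by rewrite !trmx_mul !map_mxM trmxCK hA mulmxA.
by rewrite -{2}e ct00.
Qed.

Lemma ge0_K (z : K) : z^* = z -> Rle 0 (complex.Re z) -> 0 <= z.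
Proof.
case: z => a b h1 h2; rewrite lecE /=; apply/andP; split; last by apply/RleP.
have hb : Ropp b = b by case: h1.
apply/eqP; rewrite /= -R0E; lra.
Qed.

Lemma rowcK N (r : 'rV[K]_N) : rowc N (fun p => toC ((ext (fun j => r 0 j) p)^*)) = r.
Proof. by apply/rowP => j; rewrite !mxE ofC_conj toCK ext_val conjCK. Qed.

Lemma ord_all N (P : nat -> Prop) : (forall i : 'I_N, P i) -> forall p, (p < N)%coq_nat -> P p.
Proof. by move=> H p hp; exact: (H (Ordinal (introT ssrnat.ltP hp))). Qed.

Lemma psd_mx N g : herm N g -> (forall u, Rle 0 (fst (Qf N g u))) ->
  forall r : 'rV_N, 0 <= (r *m mxg N g *m r^t*) 0 0.
Proof.
move=> hg hpsd r; rewrite -(rowcK r) -Qf_mx; apply: ge0_K; last exact: hpsd.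
by rewrite Qf_mx quad_real // herm_mx.
Qed.

Lemma CL_sqrt N g : herm N g -> (forall u, Rle 0 (fst (Qf N g u))) ->
  exists h, herm N h /\ (forall u, Rle 0 (fst (Qf N h u))) /\
   forall p q, (p < N)%coq_nat -> (q < N)%coq_nat ->
     csum N (fun r => Cmult (h p r) (h r q)) = g p q.
Proof.
move=> hg hpsd.
have [Q [hQ psdQ QQ]] := sqrt_mx (herm_mx hg) (psd_mx hg hpsd).
pose h p q := toC (ext (fun i => ext (fun j => Q i j) q) p).
have hQe : forall (i j : 'I_N), ofC (h i j) = Q i j by move=> i j; rewrite /h toCK !ext_val.
have mxh : mxg N h = Q by apply/matrixP => i j; rewrite mxE hQe.
exists h; split; [|split].
- move=> p q; move: p; apply: ord_all => i; move: q; apply: ord_all => j.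
  apply: ofC_inj; rewrite ofC_conj !hQe.
  by have := congr1 (fun M : 'M[K]_N => M j i) hQ; rewrite !mxE => <-.
- move=> u; have := psdQ (rowc N u); rewrite -mxh -Qf_mx lecE /= => /andP [_ /RleP].
  done.
- move=> p q; move: p; apply: ord_all => i; move: q; apply: ord_all => j.
  apply: ofC_inj.
  have := congr1 (fun M : 'M[K]_N => M i j) QQ; rewrite !mxE => <-.
  by rewrite ofC_csum; apply: eq_bigr => r _; rewrite ofC_mul !hQe.
Qed.

Lemma rr_csum N u : ((rowc N u) *m (rowc N u)^t*) 0 0 =
   ofC (csum N (fun p => Cmult (Cconj (u p)) (u p))).
Proof.
rewrite ofC_csum !mxE; apply: eq_bigr => j _; by rewrite !mxE ofC_mul !ofC_conj conjCK.
Qed.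

Lemma CL_pd N g : herm N g -> (forall u, Rle 0 (fst (Qf N g u))) ->
  (forall u, fst (Qf N g u) = 0%R -> forall p, (p < N)%coq_nat -> u p = RtoC 0) ->
  exists c : R, Rlt 0 c /\ forall u,
    Rle (c * rsum N (fun p => fst (Cmult (Cconj (u p)) (u p))))%R (fst (Qf N g u)).
Proof.
move=> hg hpsd hdef.
have hdefm : forall r : 'rV_N, (r *m mxg N g *m r^t*) 0 0 = 0 -> r = 0.
  move=> r; rewrite -(rowcK r) -Qf_mx => hz.
  have h0 : fst (Qf N g (fun p => toC ((ext (fun j => r 0 j) p)^*))) = 0%R.
    by have := congr1 (@complex.Re _) hz.
  have := hdef _ h0 => hu; rewrite (rowcK r); apply/rowP => j.
  have := hu j; rewrite mxE => /(_ (elimT ssrnat.ltP (ltn_ord j))) /(congr1 ofC).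
  by rewrite toCK ofC_0 => /(congr1 (@Num.conj _)); rewrite conjCK ext_val conjC0.
have [c cgt0 hc] := pd_mx (herm_mx hg) (psd_mx hg hpsd) hdefm.
move: c cgt0 hc => [c1 c2] cgt0 hc.
move: cgt0; rewrite ltcE /= => /andP [/eqP c20 /RltP c1gt0].
exists c1; split => // u.
have := hc (rowc N u); rewrite -Qf_mx rr_csum lecE /= => /andP [_ /RleP].
by rewrite c20 re_csum mul0r subr0.
Qed.

Lemma CL_dep N (w : nat -> vec) : (forall i p, (N <= p)%coq_nat -> w i p = RtoC 0) ->
  exists c : nat -> C, (exists i, (i <= N)%coq_nat /\ c i <> RtoC 0) /\
   forall p, csum N.+1 (fun i => Cmult (c i) (w i p)) = RtoC 0.
Proof.
move=> hw.
pose W : 'M[K]_(N.+1, N) := \matrix_(i, j) ofC (w i j).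
have [r rn0 rW] := dep_mx W.
exists (fun i => toC (ext (fun j => r 0 j) i)); split.
- case: (pickP (fun j => r 0 j != 0)) => [j hj | h].
    exists j; split; first by apply/ssrnat.leP; rewrite -ltnS ltn_ord.
    move=> /(congr1 ofC); rewrite toCK ext_val ofC_0 => e.
    by move: hj; rewrite e eqxx.
  case/negP: rn0; apply/eqP/rowP => j; rewrite mxE.
  by have := h j => /negbFE /eqP.
- move=> p; case: (ltnP p N) => hp.
  + apply: ofC_inj.
    have e := congr1 (fun M : 'M[K]_(1, N) => M 0 (Ordinal hp)) rW; rewrite !mxE in e.
    rewrite ofC_csum ofC_0 -[in RHS]e.
    by apply: eq_bigr => i _; rewrite ofC_mul toCK ext_val mxE.
  + rewrite csum_zero // => i _; rewrite hw; first exact: Cmult_0_r.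
    by apply/ssrnat.leP.
Qed.
End MC.

Lemma CL_dep N (w : nat -> vec) : (forall i p, (N <= p)%nat -> w i p = RtoC 0) ->
  exists c : nat -> C, (exists i, (i <= N)%nat /\ c i <> RtoC 0) /\
   forall p, csum (S N) (fun i => Cmult (c i) (w i p)) = RtoC 0.
Proof. exact (@MC.CL_dep N w). Qed.

Lemma CL_sqrt N g : herm N g -> (forall u, (0 <= fst (Qf N g u))%R) ->
  exists h, herm N h /\ (forall u, (0 <= fst (Qf N h u))%R) /\
   forall p q, (p < N)%nat -> (q < N)%nat ->
     csum N (fun r => Cmult (h p r) (h r q)) = g p q.
Proof. exact (@MC.CL_sqrt N g). Qed.

Lemma CL_pd N g : herm N g -> (forall u, (0 <= fst (Qf N g u))%R) ->
  (forall u, fst (Qf N g u) = 0%R -> forall p, (p < N)%nat -> u p = RtoC 0) ->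
  exists c : R, (0 < c)%R /\ forall u,
    (c * rsum N (fun p => fst (Cmult (Cconj (u p)) (u p))) <= fst (Qf N g u))%R.
Proof. exact (@MC.CL_pd N g). Qed.

Definition supp (N : nat) (u : vec) : Prop := forall p, (N <= p)%nat -> u p = RtoC 0.
Definition cser (f : nat -> C) : C := (Series (fun p => Re (f p)), Series (fun p => Im (f p))).
Definition cex (f : nat -> C) : Prop := ex_series (fun p => Re (f p)) /\ ex_series (fun p => Im (f p)).
Definition ev (j : nat) : vec := fun p => if Nat.eqb p j then RtoC 1 else RtoC 0.

Section SER.
Local Open Scope R_scope.

Lemma ex0 : ex_series (fun _ : nat => 0).
Proof.
apply ex_series_ext with (fun n => (1/2)^n * 0). intros n; apply Rmult_0_r.
apply ex_series_scal_r. apply ex_series_geom. rewrite Rabs_pos_eq; lra.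
Qed.

Lemma ex_series_Rplus (a b : nat -> R) : ex_series a -> ex_series b -> ex_series (fun n => a n + b n).
Proof. intros Ha Hb. exact (@ex_series_plus R_AbsRing R_NormedModule a b Ha Hb). Qed.
Lemma ex_series_Rscal (c : R) (a : nat -> R) : ex_series a -> ex_series (fun n => c * a n).
Proof. intros Ha. exact (@ex_series_scal_l R_AbsRing R_NormedModule c a Ha). Qed.

Lemma Series0 : Series (fun _ : nat => 0) = 0.
Proof.
rewrite (Series_ext _ (fun n : nat => 0 * 0)) by (intros; ring).
rewrite Series_scal_l. ring.
Qed.

Lemma sum_f_rsum a m : sum_f_R0 a m = rsum (S m) a.
Proof. induction m; simpl. ring. simpl in IHm. rewrite IHm. ring. Qed.

Lemma Series_split a N : ex_series a -> Series a = rsum N a + Series (fun q => a (N + q)%nat).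
Proof.
intros H. destruct N as [|m].
- simpl. rewrite Rplus_0_l. apply Series_ext. intros; reflexivity.
- rewrite (Series_incr_n a (S m)) by (auto; lia). simpl pred. rewrite sum_f_rsum. reflexivity.
Qed.

Lemma ex_fin a N : (forall p, (N <= p)%nat -> a p = 0) -> ex_series a.
Proof.
intros H. apply (proj2 (ex_series_incr_n a N)).
apply ex_series_ext with (fun _ => 0). intros; rewrite H; auto; lia. apply ex0.
Qed.

Lemma Series_fin a N : (forall p, (N <= p)%nat -> a p = 0) -> Series a = rsum N a.
Proof.
intros H. rewrite (Series_split a N) by (apply ex_fin with N; auto).
rewrite (Series_ext _ (fun _ => 0)) by (intros; apply H; lia). rewrite Series0. ring.
Qed.

Lemma Series_ge0 a : ex_series a -> (forall p, 0 <= a p) -> 0 <= Series a.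
Proof.
intros H H0. rewrite <- Series0. apply Series_le; auto. intros; split; auto; lra.
Qed.

Lemma term_le a p : ex_series a -> (forall q, 0 <= a q) -> a p <= Series a.
Proof.
intros H H0. rewrite (Series_split a (S p)) by auto.
assert (a p <= rsum (S p) a) by (apply rsum_term; auto).
assert (0 <= Series (fun q => a (S p + q)%nat)).
{ apply Series_ge0; auto. apply (ex_series_incr_n a (S p)); auto. }
lra.
Qed.

Lemma zero_terms a p : ex_series a -> (forall q, 0 <= a q) -> Series a = 0 -> a p = 0.
Proof. intros H H0 H1. pose proof (term_le a p H H0). pose proof (H0 p). lra. Qed.

Lemma cmod2 z : Cmod z ^ 2 = fst z ^ 2 + snd z ^ 2.
Proof. apply Cmod2_alt. Qed.

Lemma cmod2_ge0 z : 0 <= Cmod z ^ 2.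
Proof. apply pow2_ge_0. Qed.

Lemma l2_fin u N : supp N u -> l2 u.
Proof.
intros H. apply ex_fin with N. intros p Hp. rewrite H by auto. rewrite Cmod_0. ring.
Qed.

Lemma hnorm_fin u N : supp N u -> hnorm u = sqrt (rsum N (fun p => Cmod (u p) ^ 2)).
Proof.
intros H. unfold hnorm. f_equal. apply Series_fin. intros p Hp. rewrite H by auto. rewrite Cmod_0. ring.
Qed.

Lemma Series_l2_ge0 u : l2 u -> 0 <= Series (fun p => Cmod (u p) ^ 2).
Proof. intros H. apply Series_ge0; auto. intros; apply cmod2_ge0. Qed.

Lemma hnorm_sq u : l2 u -> hnorm u ^ 2 = Series (fun p => Cmod (u p) ^ 2).
Proof. intros H. unfold hnorm. rewrite pow2_sqrt; auto. apply Series_l2_ge0; auto. Qed.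

Lemma hnorm_ge0 u : 0 <= hnorm u.
Proof. apply sqrt_pos. Qed.

Lemma coord_le u p : l2 u -> Cmod (u p) <= hnorm u.
Proof.
intros H. unfold hnorm. rewrite <- (sqrt_pow2 (Cmod (u p))) by apply Cmod_ge_0.
apply sqrt_le_1_alt. apply (term_le (fun q => Cmod (u q) ^ 2) p H). intros; apply cmod2_ge0.
Qed.

Lemma l2_sub u v : l2 u -> l2 v -> l2 (vsub u v).
Proof.
intros Hu Hv. unfold l2.
apply (@ex_series_le R_AbsRing R_CompleteNormedModule) with (fun p => 2 * (Cmod (u p) ^ 2) + 2 * (Cmod (v p) ^2)).
- intros p. unfold norm; simpl. change (abs (Cmod (vsub u v p) ^ 2)) with (Rabs (Cmod (vsub u v p) ^ 2)).
  rewrite Rabs_pos_eq by apply cmod2_ge0.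
  unfold vsub. pose proof (Cmod_triangle (u p) (- v p)%C). rewrite Cmod_opp in H.
  pose proof (Cmod_ge_0 (u p - v p)%C). pose proof (Cmod_ge_0 (u p)). pose proof (Cmod_ge_0 (v p)).
  unfold Cminus in *.
  assert (Cmod (u p + - v p)%C * Cmod (u p + - v p)%C <= (Cmod (u p) + Cmod (v p)) * (Cmod (u p) + Cmod (v p))).
  { apply Rmult_le_compat; lra. }
  pose proof (pow2_ge_0 (Cmod (u p) - Cmod (v p))). simpl. nra.
- apply ex_series_Rplus; apply ex_series_Rscal; auto.
Qed.

Lemma re_mul_conj_le a b : Rabs (Re (Cmult a (Cconj b))) <= Cmod a ^ 2 + Cmod b ^ 2.
Proof.
eapply Rle_trans. apply re_le_Cmod. rewrite Cmod_mult, Cmod_conj.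
pose proof (Cmod_ge_0 a). pose proof (Cmod_ge_0 b). nra.
Qed.

Lemma im_le_Cmod c : Rabs (Im c) <= Cmod c.
Proof.
unfold Cmod, Im. destruct (sqrt_plus_sqr (fst c) (snd c)) as [H _].
eapply Rle_trans; [apply Rmax_r | exact H].
Qed.

Lemma im_mul_conj_le a b : Rabs (Im (Cmult a (Cconj b))) <= Cmod a ^ 2 + Cmod b ^ 2.
Proof.
eapply Rle_trans. apply im_le_Cmod. rewrite Cmod_mult, Cmod_conj.
pose proof (Cmod_ge_0 a). pose proof (Cmod_ge_0 b). nra.
Qed.

Lemma cex_inner u v : l2 u -> l2 v -> cex (fun p => Cmult (u p) (Cconj (v p))).
Proof.
intros Hu Hv. split.
- apply (@ex_series_le R_AbsRing R_CompleteNormedModule) with (fun p => Cmod (u p) ^ 2 + Cmod (v p) ^ 2).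
  intros p. apply re_mul_conj_le. apply ex_series_Rplus; auto.
- apply (@ex_series_le R_AbsRing R_CompleteNormedModule) with (fun p => Cmod (u p) ^ 2 + Cmod (v p) ^ 2).
  intros p. apply im_mul_conj_le. apply ex_series_Rplus; auto.
Qed.

Lemma cser_split f N : cex f -> cser f = Cplus (csum N f) (cser (fun q => f (N + q)%nat)).
Proof.
intros [H1 H2]. unfold cser. apply injective_projections; simpl.
- rewrite (Series_split _ N H1). rewrite re_csum. reflexivity.
- rewrite (Series_split _ N H2). rewrite im_csum. reflexivity.
Qed.

Lemma cser_ext f g : (forall p, f p = g p) -> cser f = cser g.
Proof. intros H. unfold cser. f_equal; apply Series_ext; intros; rewrite H; auto. Qed.

Lemma cser_fin f N : (forall p, (N <= p)%nat -> f p = RtoC 0) -> cser f = csum N f.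
Proof.
intros H. unfold cser. apply injective_projections; simpl.
- rewrite (Series_fin _ N). rewrite re_csum; auto. intros p Hp; rewrite H; auto.
- rewrite (Series_fin _ N). rewrite im_csum; auto. intros p Hp; rewrite H; auto.
Qed.

Lemma inner_cser u v : inner u v = cser (fun p => Cmult (u p) (Cconj (v p))).
Proof. reflexivity. Qed.

Lemma inner_fin_r u v N : supp N v -> inner u v = csum N (fun p => Cmult (u p) (Cconj (v p))).
Proof.
intros H. rewrite inner_cser. apply cser_fin. intros p Hp. rewrite H by auto.
apply injective_projections; simpl; ring.
Qed.

Lemma inner_fin_l u v N : supp N u -> inner u v = csum N (fun p => Cmult (u p) (Cconj (v p))).
Proof.
intros H. rewrite inner_cser. apply cser_fin. intros p Hp. rewrite H by auto.
apply injective_projections; simpl; ring.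
Qed.

Lemma supp_ev j : supp (S j) (ev j).
Proof. intros p Hp. unfold ev. destruct (Nat.eqb_spec p j); auto; lia. Qed.

Lemma inner_ev w j : inner (ev j) w = Cconj (w j).
Proof.
rewrite (inner_fin_l _ _ (S j)) by apply supp_ev.
rewrite <- (csum_delta (S j) j (fun q => Cconj (w q))) by lia.
apply csum_ext. intros i Hi. unfold ev. destruct (Nat.eqb_spec i j);
apply injective_projections; simpl; ring.
Qed.

Lemma inner_zero_l w : inner vzero w = RtoC 0.
Proof. rewrite (inner_fin_l _ _ 0). reflexivity. intros p _; reflexivity. Qed.

Lemma inner_zero_r w : inner w vzero = RtoC 0.
Proof. rewrite (inner_fin_r _ _ 0). reflexivity. intros p _; reflexivity. Qed.

Lemma re_mul_conj z : Re (Cmult z (Cconj z)) = Cmod z ^ 2.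
Proof. rewrite cmod2. unfold Re; simpl. ring. Qed.

Lemma inner_self u : l2 u -> Re (inner u u) = hnorm u ^ 2.
Proof.
intros H. rewrite hnorm_sq by auto. unfold inner, Re at 1; simpl.
apply Series_ext. intros p. apply re_mul_conj.
Qed.

Lemma l2_zero u : l2 u -> Re (inner u u) = 0 -> u = vzero.
Proof.
intros H H0. unfold inner, Re at 1 in H0; simpl in H0.
rewrite (Series_ext _ (fun p => Cmod (u p) ^ 2)) in H0 by (intros; apply re_mul_conj).
apply functional_extensionality. intros p. unfold vzero.
apply Cmod_eq_0. pose proof (zero_terms _ p H (fun q => cmod2_ge0 _) H0). simpl in H1.
pose proof (Cmod_ge_0 (u p)). nra.
Qed.

End SER.

Lemma adj_unique A B : is_adjoint A B -> forall v, l2 v -> adj A v = B v.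
Proof.
intros HB v Hv.
assert (Ha : is_adjoint A (adj A)).
{ unfold adj. apply epsilon_spec. exists B; auto. }
apply functional_extensionality. intros p.
destruct Ha as [_ Ha]. destruct HB as [_ HB].
assert (E : inner (ev p) (adj A v) = inner (ev p) (B v)).
{ rewrite <- Ha, <- HB; auto; apply l2_fin with (S p); apply supp_ev. }
rewrite !inner_ev in E. rewrite <- (Cconj_conj (adj A v p)), E. apply Cconj_conj.
Qed.

Lemma sqrt_spec A D : is_pos_sqrt A D -> is_pos_sqrt A (sqrt_op A).
Proof. intros H. unfold sqrt_op. apply epsilon_spec. exists D; auto. Qed.

Definition matop (N : nat) (g : nat -> nat -> C) : op := fun u p =>
  if Nat.ltb p N then csum N (fun q => Cmult (g p q) (u q)) else RtoC 0.

Section Ops.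
Variables (n k : nat) (X : nat -> nat -> C).
Local Open Scope C_scope.

Definition Mx i p := X (S i) (S p).
Definition F1f (u : vec) : vec := fun p =>
  if Nat.ltb p (n + k) then csum n (fun i => u i * Mx i p) else 0.
Definition Tf (u : vec) : vec := fun p =>
  if Nat.ltb p (n + k) then csum n (fun i => u i * Mx i p) else u (p - k)%nat.
Definition F1sf (v : vec) : vec := fun i =>
  if Nat.ltb i n then csum (n + k) (fun p => Cconj (Mx i p) * v p) else 0.
Definition Tsf (v : vec) : vec := fun i =>
  if Nat.ltb i n then csum (n + k) (fun p => Cconj (Mx i p) * v p) else v (i + k)%nat.
Definition Gm p q := (if Nat.eqb p q then 1 else 0) - csum (n + k) (fun r => Cconj (Mx p r) * Mx q r).
Definition Gs p q := (if Nat.eqb p q then 1 else 0) - csum n (fun i => Mx i p * Cconj (Mx i q)).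

Lemma csum_shift_delta (u : vec) p : (p < n + k)%nat ->
  csum n (fun i => u i * (if Nat.eqb p (i + k) then 1 else 0)) =
  if Nat.ltb p k then 0 else u (p - k)%nat.
Proof.
intros Hp. destruct (Nat.ltb_spec p k).
- apply csum_zero. intros i Hi. destruct (Nat.eqb_spec p (i + k)). lia. ring.
- rewrite <- (csum_delta n (p - k) u) by lia. apply csum_ext. intros i Hi.
  destruct (Nat.eqb_spec p (i + k)); destruct (Nat.eqb_spec i (p - k)); try lia; ring.
Qed.

Lemma Fop_eq u p : Fop n k X u p =
  if Nat.ltb p (n + k) then csum n (fun i => u i * Mx i p) - (if Nat.ltb p k then 0 else u (p - k)%nat)
  else 0.
Proof.
unfold Fop. destruct (Nat.ltb_spec p (n + k)); auto.
rewrite <- csum_shift_delta by auto. rewrite <- csum_minus. apply csum_ext. intros i Hi.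
unfold Mx. destruct (Nat.eqb p (i + k)); ring.
Qed.

Lemma F1_eq u : F1op n k X u = F1f u.
Proof.
apply functional_extensionality. intros p. unfold F1op, vadd, F1f, Sk, Pj.
rewrite Fop_eq. destruct (Nat.ltb_spec p (n + k)); destruct (Nat.ltb_spec p k);
try destruct (Nat.ltb_spec (p - k) n); try lia; ring.
Qed.

Lemma T_eq u : Top n k X u = Tf u.
Proof.
apply functional_extensionality. intros p. unfold Top, vadd, Tf, Sk.
rewrite Fop_eq. destruct (Nat.ltb_spec p (n + k)); destruct (Nat.ltb_spec p k); try lia; ring.
Qed.

Lemma T_decomp u : Tf u = vadd (F1f u) (Sk k (vsub u (Pj n u))).
Proof.
apply functional_extensionality. intros p. unfold Tf, F1f, vadd, Sk, vsub, Pj.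
destruct (Nat.ltb_spec p (n + k)); destruct (Nat.ltb_spec p k);
try destruct (Nat.ltb_spec (p - k) n); try lia; ring.
Qed.

Lemma supp_F1 u : supp (n + k) (F1f u).
Proof. intros p Hp. unfold F1f. destruct (Nat.ltb_spec p (n + k)); auto; lia. Qed.

Lemma supp_F1s v : supp n (F1sf v).
Proof. intros p Hp. unfold F1sf. destruct (Nat.ltb_spec p n); auto; lia. Qed.

Lemma supp_Pj j u : supp j (Pj j u).
Proof. intros p Hp. unfold Pj. destruct (Nat.ltb_spec p j); auto; lia. Qed.

Lemma F1_Pj u : F1f (Pj n u) = F1f u.
Proof.
apply functional_extensionality. intros p. unfold F1f.
destruct (Nat.ltb_spec p (n + k)); auto. apply csum_ext. intros i Hi. unfold Pj.
destruct (Nat.ltb_spec i n); auto; lia.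
Qed.

Lemma F1s_Pj v : F1sf (Pj (n + k) v) = F1sf v.
Proof.
apply functional_extensionality. intros i. unfold F1sf.
destruct (Nat.ltb_spec i n); auto. apply csum_ext. intros p Hp. unfold Pj.
destruct (Nat.ltb_spec p (n + k)); auto; lia.
Qed.

Lemma adjF1_fin u v :
  csum (n + k) (fun p => F1f u p * Cconj (v p)) = csum n (fun i => u i * Cconj (F1sf v i)).
Proof.
rewrite (csum_ext (n + k) _ (fun p => csum n (fun i => u i * Mx i p * Cconj (v p)))).
2:{ intros p Hp. unfold F1f. destruct (Nat.ltb_spec p (n + k)); try lia.
    rewrite <- csum_scal_r. auto. }
rewrite csum_swap. apply csum_ext. intros i Hi. unfold F1sf.
destruct (Nat.ltb_spec i n); try lia. rewrite csum_conj, <- csum_scal_l.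
apply csum_ext. intros p Hp. rewrite Cmult_conj, Cconj_conj. ring.
Qed.

Lemma adj_F1 : is_adjoint (F1op n k X) F1sf.
Proof.
split.
- intros u _. apply l2_fin with n. apply supp_F1s.
- intros u v Hu Hv. rewrite F1_eq.
  rewrite (inner_fin_l _ _ (n + k)) by apply supp_F1.
  rewrite (inner_fin_r _ _ n) by apply supp_F1s.
  apply adjF1_fin.
Qed.

Lemma l2_Tf u : l2 u -> l2 (Tf u).
Proof.
intros Hu. unfold l2. apply (proj2 (ex_series_incr_n _ (n + k))).
apply (proj1 (ex_series_incr_n _ n)) in Hu.
eapply ex_series_ext; [|exact Hu]. intros q. simpl. unfold Tf.
destruct (Nat.ltb_spec (n + k + q) (n + k)); try lia.
replace (n + k + q - k)%nat with (n + q)%nat by lia. reflexivity.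
Qed.

Lemma l2_Tsf v : l2 v -> l2 (Tsf v).
Proof.
intros Hv. unfold l2. apply (proj2 (ex_series_incr_n _ n)).
apply (proj1 (ex_series_incr_n _ (n + k))) in Hv.
eapply ex_series_ext; [|exact Hv]. intros q. simpl. unfold Tsf.
destruct (Nat.ltb_spec (n + q) n); try lia.
replace (n + q + k)%nat with (n + k + q)%nat by lia. reflexivity.
Qed.

Lemma adj_T : is_adjoint (Top n k X) Tsf.
Proof.
split.
- apply l2_Tsf.
- intros u v Hu Hv. rewrite T_eq. rewrite !inner_cser.
  rewrite (cser_split (fun p => Tf u p * Cconj (v p)) (n + k)) by (apply cex_inner; auto; apply l2_Tf; auto).
  rewrite (cser_split (fun p => u p * Cconj (Tsf v p)) n) by (apply cex_inner; auto; apply l2_Tsf; auto).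
  f_equal.
  + rewrite (csum_ext (n + k) _ (fun p => F1f u p * Cconj (v p))).
    2:{ intros p Hp. unfold Tf, F1f. destruct (Nat.ltb_spec p (n + k)); try lia. auto. }
    rewrite adjF1_fin. apply csum_ext. intros i Hi. unfold Tsf, F1sf.
    destruct (Nat.ltb_spec i n); try lia. auto.
  + apply cser_ext. intros q. unfold Tf, Tsf.
    destruct (Nat.ltb_spec (n + k + q) (n + k)); try lia.
    destruct (Nat.ltb_spec (n + q) n); try lia.
    replace (n + k + q - k)%nat with (n + q)%nat by lia.
    replace (n + q + k)%nat with (n + k + q)%nat by lia. auto.
Qed.


Lemma Gm_row u p : (p < n)%nat ->
  csum n (fun q => Gm p q * u q) = u p - csum (n + k) (fun r => Cconj (Mx p r) * F1f u r).
Proof.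
intros Hp.
rewrite (csum_ext n _ (fun q => (if Nat.eqb q p then u q else 0) -
           csum (n + k) (fun r => Cconj (Mx p r) * Mx q r * u q))).
2:{ intros q Hq. unfold Gm. rewrite Nat.eqb_sym. rewrite csum_scal_r.
    destruct (Nat.eqb q p); ring. }
rewrite csum_minus, csum_delta by auto. f_equal.
rewrite csum_swap. apply csum_ext. intros r Hr. unfold F1f.
destruct (Nat.ltb_spec r (n + k)); try lia. rewrite <- csum_scal_l.
apply csum_ext. intros q Hq. ring.
Qed.

Lemma Gs_row u p : (p < n + k)%nat ->
  csum (n + k) (fun q => Gs p q * u q) = u p - csum n (fun i => F1sf u i * Mx i p).
Proof.
intros Hp.
rewrite (csum_ext (n + k) _ (fun q => (if Nat.eqb q p then u q else 0) -
           csum n (fun i => Mx i p * Cconj (Mx i q) * u q))).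
2:{ intros q Hq. unfold Gs. rewrite Nat.eqb_sym. rewrite csum_scal_r.
    destruct (Nat.eqb q p); ring. }
rewrite csum_minus, csum_delta by auto. f_equal.
rewrite csum_swap. apply csum_ext. intros i Hi. unfold F1sf.
destruct (Nat.ltb_spec i n); try lia. rewrite <- csum_scal_r.
apply csum_ext. intros q Hq. ring.
Qed.

Lemma AT_eq u : l2 u -> vsub u (adj (Top n k X) (Top n k X u)) = matop n Gm u.
Proof.
intros Hu. rewrite (adj_unique _ _ adj_T) by (rewrite T_eq; apply l2_Tf; auto).
rewrite T_eq. apply functional_extensionality. intros p. unfold vsub, matop.
destruct (Nat.ltb_spec p n).
- rewrite Gm_row by auto. unfold Tsf. destruct (Nat.ltb_spec p n); try lia. f_equal.
  apply csum_ext. intros r Hr. unfold Tf, F1f. destruct (Nat.ltb_spec r (n + k)); try lia. auto.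
- unfold Tsf. destruct (Nat.ltb_spec p n); try lia. unfold Tf.
  destruct (Nat.ltb_spec (p + k) (n + k)); try lia.
  replace (p + k - k)%nat with p by lia. ring.
Qed.

Lemma AsT_eq u : l2 u -> vsub u (Top n k X (adj (Top n k X) u)) = matop (n + k) Gs u.
Proof.
intros Hu. rewrite (adj_unique _ _ adj_T) by auto.
rewrite T_eq. apply functional_extensionality. intros p. unfold vsub, matop.
destruct (Nat.ltb_spec p (n + k)).
- rewrite Gs_row by auto. unfold Tf. destruct (Nat.ltb_spec p (n + k)); try lia. f_equal.
  apply csum_ext. intros i Hi. unfold Tsf, F1sf. destruct (Nat.ltb_spec i n); try lia. auto.
- unfold Tf. destruct (Nat.ltb_spec p (n + k)); try lia. unfold Tsf.
  destruct (Nat.ltb_spec (p - k) n); try lia.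
  replace (p - k + k)%nat with p by lia. ring.
Qed.

Lemma herm_Gm : herm n Gm.
Proof.
intros p q Hp Hq. unfold Gm. rewrite Cminus_conj, csum_conj. f_equal.
- rewrite Nat.eqb_sym. destruct (Nat.eqb p q); apply injective_projections; simpl; ring.
- apply csum_ext. intros r Hr. rewrite Cmult_conj, Cconj_conj. ring.
Qed.

Lemma herm_Gs : herm (n + k) Gs.
Proof.
intros p q Hp Hq. unfold Gs. rewrite Cminus_conj, csum_conj. f_equal.
- rewrite Nat.eqb_sym. destruct (Nat.eqb p q); apply injective_projections; simpl; ring.
- apply csum_ext. intros r Hr. rewrite Cmult_conj, Cconj_conj. ring.
Qed.

Lemma Qf_Gm u : Qf n Gm u =
  csum n (fun p => u p * Cconj (u p)) - csum (n + k) (fun r => F1f u r * Cconj (F1f u r)).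
Proof.
unfold Qf. rewrite (csum_ext n _ (fun p => u p * Cconj (u p) -
   csum (n + k) (fun r => Cconj (Mx p r) * F1f u r * Cconj (u p)))).
2:{ intros p Hp. rewrite Gm_row by auto. rewrite csum_scal_r. ring. }
rewrite csum_minus. f_equal. rewrite csum_swap. apply csum_ext. intros r Hr.
rewrite (csum_ext n _ (fun p => F1f u r * (Cconj (Mx p r) * Cconj (u p)))) by (intros; ring).
rewrite csum_scal_l. f_equal. unfold F1f. destruct (Nat.ltb_spec r (n + k)); try lia.
rewrite csum_conj. apply csum_ext. intros i Hi. rewrite Cmult_conj. ring.
Qed.

Lemma Qf_Gs u : Qf (n + k) Gs u =
  csum (n + k) (fun p => u p * Cconj (u p)) - csum n (fun i => F1sf u i * Cconj (F1sf u i)).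
Proof.
unfold Qf. rewrite (csum_ext (n + k) _ (fun p => u p * Cconj (u p) -
   csum n (fun i => F1sf u i * Mx i p * Cconj (u p)))).
2:{ intros p Hp. rewrite Gs_row by auto. rewrite csum_scal_r. ring. }
rewrite csum_minus. f_equal. rewrite csum_swap. apply csum_ext. intros i Hi.
rewrite (csum_ext (n + k) _ (fun p => F1sf u i * (Mx i p * Cconj (u p)))) by (intros; ring).
rewrite csum_scal_l. f_equal. unfold F1sf. destruct (Nat.ltb_spec i n); try lia.
rewrite csum_conj. apply csum_ext. intros p Hp. rewrite Cmult_conj, Cconj_conj. ring.
Qed.

End Ops.

Lemma re_minus (a b : C) : fst (Cminus a b) = (fst a - fst b)%R.
Proof. simpl. ring. Qed.
Lemma re_plus (a b : C) : fst (Cplus a b) = (fst a + fst b)%R.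
Proof. reflexivity. Qed.
Lemma re_cconj (a : C) : fst (Cconj a) = fst a.
Proof. reflexivity. Qed.

Lemma re_csum_sq N (u : vec) : fst (csum N (fun p => Cmult (u p) (Cconj (u p)))) = rsum N (fun p => Cmod (u p) ^ 2).
Proof. rewrite re_csum. apply rsum_ext. intros i _. apply re_mul_conj. Qed.

Lemma rsum_sq_ge0 N (u : vec) : (0 <= rsum N (fun p => Cmod (u p) ^ 2))%R.
Proof. apply rsum_nonneg. intros; apply cmod2_ge0. Qed.

Lemma hnorm2_fin N u : supp N u -> (hnorm u ^ 2 = rsum N (fun p => Cmod (u p) ^ 2))%R.
Proof. intros H. rewrite (hnorm_fin u N H). apply pow2_sqrt. apply rsum_sq_ge0. Qed.

Lemma Qf_ext N g u v : (forall p, (p < N)%nat -> u p = v p) -> Qf N g u = Qf N g v.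
Proof.
intros H. unfold Qf. apply csum_ext. intros p Hp. rewrite H by auto. f_equal.
apply csum_ext. intros q Hq. rewrite H; auto.
Qed.

Lemma sq_le a b : (0 <= a)%R -> (a <= b)%R -> (a ^ 2 <= b ^ 2)%R.
Proof. intros. nra. Qed.

Lemma csum_sq_minus N (a b : vec) :
  csum N (fun p => Cmult (Cminus (a p) (b p)) (Cconj (Cminus (a p) (b p)))) =
  Cminus (Cminus (csum N (fun p => Cmult (a p) (Cconj (a p)))) (csum N (fun p => Cmult (b p) (Cconj (a p)))))
   (Cminus (Cconj (csum N (fun p => Cmult (b p) (Cconj (a p))))) (csum N (fun p => Cmult (b p) (Cconj (b p))))).
Proof.
rewrite csum_conj.
rewrite <- !csum_minus. apply csum_ext. intros p _. rewrite Cminus_conj, Cmult_conj, Cconj_conj. ring.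
Qed.

Section Main.
Variables (n k : nat) (X : nat -> nat -> C).
Hypothesis Hc : contraction (Top n k X).

Lemma Tf_fin w : supp n w -> Tf n k X w = F1f n k X w.
Proof.
intros H. apply functional_extensionality. intros p. unfold Tf, F1f.
destruct (Nat.ltb_spec p (n + k)); auto. apply H. lia.
Qed.

Lemma F1_contr w : supp n w ->
  (rsum (n + k) (fun p => Cmod (F1f n k X w p) ^ 2) <= rsum n (fun p => Cmod (w p) ^ 2))%R.
Proof.
intros H. destruct Hc as [_ [_ Hn]].
pose proof (Hn w (l2_fin w n H)). rewrite T_eq, Tf_fin in H0 by auto.
rewrite <- (hnorm2_fin _ _ H), <- (hnorm2_fin _ _ (supp_F1 n k X w)).
apply sq_le; auto. apply hnorm_ge0.
Qed.

Lemma psd_Gm u : (0 <= fst (Qf n (Gm n k X) u))%R.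
Proof.
rewrite (Qf_ext n _ u (Pj n u)) by (intros p Hp; unfold Pj; destruct (Nat.ltb_spec p n); auto; lia).
rewrite Qf_Gm, re_minus, !re_csum_sq.
pose proof (F1_contr (Pj n u) (supp_Pj n u)). lra.
Qed.

Lemma psd_Gs u : (0 <= fst (Qf (n + k) (Gs n X) u))%R.
Proof.
set (y := Pj (n + k) u).
rewrite (Qf_ext (n + k) _ u y) by (intros p Hp; unfold y, Pj; destruct (Nat.ltb_spec p (n + k)); auto; lia).
set (z := F1sf n k X y).
pose proof (psd_Gm z) as Hz.
rewrite Qf_Gm, re_minus, !re_csum_sq in Hz.
pose proof (rsum_sq_ge0 (n + k) (fun p => Cminus (y p) (F1f n k X z p))) as H0.
rewrite <- re_csum_sq, csum_sq_minus in H0.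
rewrite adjF1_fin in H0. fold z in H0.
rewrite !re_minus, re_cconj, !re_csum_sq in H0.
rewrite Qf_Gs, re_minus, !re_csum_sq. fold z. lra.
Qed.

End Main.

Section Mat.
Local Open Scope C_scope.
Variables (N : nat) (h : nat -> nat -> C).

Lemma supp_matop u : supp N (matop N h u).
Proof. intros p Hp. unfold matop. destruct (Nat.ltb_spec p N); auto; lia. Qed.

Lemma matop_lin : lin_on_l2 (matop N h).
Proof.
intros a b u v _ _. apply functional_extensionality. intros p. unfold matop, vadd, vscal.
destruct (Nat.ltb_spec p N).
- rewrite <- !csum_scal_l, <- csum_plus. apply csum_ext. intros; ring.
- ring.
Qed.

Lemma matop_comp g u : (forall p q, (p < N)%nat -> (q < N)%nat -> csum N (fun r => h p r * h r q) = g p q) ->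
  matop N h (matop N h u) = matop N g u.
Proof.
intros H. apply functional_extensionality. intros p. unfold matop at 1 3.
destruct (Nat.ltb_spec p N); auto.
rewrite (csum_ext N _ (fun r => csum N (fun q => h p r * h r q * u q))).
2:{ intros r Hr. unfold matop. destruct (Nat.ltb_spec r N); try lia.
    rewrite <- csum_scal_l. apply csum_ext; intros; ring. }
rewrite csum_swap. apply csum_ext. intros q Hq. rewrite csum_scal_r. rewrite H; auto.
Qed.

Lemma cmod_csum n0 (f : nat -> C) : (Cmod (csum n0 f) <= rsum n0 (fun i => Cmod (f i)))%R.
Proof.
induction n0; simpl. rewrite Cmod_0. lra.
eapply Rle_trans. apply Cmod_triangle. lra.
Qed.

Lemma matop_bound : exists M : R, forall u, l2 u -> (hnorm (matop N h u) <= M * hnorm u)%R.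
Proof.
set (B := rsum N (fun p => (rsum N (fun q => Cmod (h p q))) ^ 2)%R).
exists (sqrt B). intros u Hu.
assert (Hp : forall p, (p < N)%nat -> (Cmod (matop N h u p) <= rsum N (fun q => Cmod (h p q)) * hnorm u)%R).
{ intros p Hp. unfold matop. destruct (Nat.ltb_spec p N); try lia.
  eapply Rle_trans. apply cmod_csum. rewrite Rmult_comm, <- rsum_scal.
  apply rsum_le. intros q Hq. rewrite Cmod_mult. rewrite Rmult_comm.
  apply Rmult_le_compat_r. apply Cmod_ge_0. apply coord_le; auto. }
rewrite (hnorm_fin _ N) by apply supp_matop.
rewrite <- (sqrt_pow2 (hnorm u)) by apply hnorm_ge0. rewrite <- sqrt_mult.
2:{ unfold B. apply rsum_nonneg. intros; apply pow2_ge_0. }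
2:{ apply pow2_ge_0. }
apply sqrt_le_1_alt. unfold B. rewrite Rmult_comm, <- rsum_scal.
apply rsum_le. intros p Hp'. pose proof (Hp p Hp').
pose proof (Cmod_ge_0 (matop N h u p)).
replace (hnorm u ^ 2 * rsum N (fun q => Cmod (h p q)) ^ 2)%R with ((rsum N (fun q => Cmod (h p q)) * hnorm u) ^ 2)%R by ring.
apply sq_le; auto.
Qed.

Lemma inner_matop u v : inner (matop N h u) v = csum N (fun p => csum N (fun q => h p q * u q) * Cconj (v p)).
Proof.
rewrite (inner_fin_l _ _ N) by apply supp_matop. apply csum_ext. intros p Hp.
unfold matop. destruct (Nat.ltb_spec p N); auto; lia.
Qed.

Lemma matop_sa u v : herm N h -> inner (matop N h u) v = inner u (matop N h v).
Proof.
intros Hh. rewrite inner_matop. rewrite (inner_fin_r _ _ N) by apply supp_matop.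
rewrite (csum_ext N _ (fun p => csum N (fun q => h p q * u q * Cconj (v p)))) by (intros; symmetry; apply csum_scal_r).
rewrite csum_swap. apply csum_ext. intros q Hq. unfold matop.
destruct (Nat.ltb_spec q N); try lia. rewrite csum_conj, <- csum_scal_l.
apply csum_ext. intros p Hp. rewrite Cmult_conj, <- Hh by auto. ring.
Qed.

Lemma inner_matop_self u : inner (matop N h u) u = Qf N h u.
Proof. rewrite inner_matop. reflexivity. Qed.

End Mat.

Lemma pos_sqrt_exists (A : op) N g : herm N g -> (forall u, (0 <= fst (Qf N g u))%R) ->
  (forall u, l2 u -> A u = matop N g u) -> is_pos_sqrt A (sqrt_op A).
Proof.
intros Hg Hpsd HA. destruct (CL_sqrt N g Hg Hpsd) as [h [Hh [Hhp Hhh]]].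
apply sqrt_spec with (matop N h).
split; [|split; [|split; [|split; [|split]]]].
- intros u _. apply l2_fin with N. apply supp_matop.
- apply matop_lin.
- apply matop_bound.
- intros u v _ _. apply matop_sa; auto.
- intros u _. rewrite inner_matop_self. apply Hhp.
- intros u Hu. rewrite HA by auto. apply matop_comp; auto.
Qed.

Lemma small_zero (a W : R) : (0 <= a)%R -> (0 <= W)%R -> (forall eps, (0 < eps)%R -> (a <= eps * W)%R) -> a = 0%R.
Proof.
intros Ha HW H. destruct (Rle_lt_or_eq_dec 0 a Ha) as [Hlt|]; auto.
pose proof (H (a / (2 * (W + 1)))%R) as H1.
assert (0 < a / (2 * (W + 1)))%R by (apply Rdiv_lt_0_compat; lra).
specialize (H1 H0).
assert (a / (2 * (W + 1)) * W < a)%R.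
{ unfold Rdiv. replace (a * / (2 * (W + 1)) * W)%R with (a * (W / (2 * (W + 1))))%R by (field; lra).
  assert (W / (2 * (W + 1)) < 1)%R. { apply Rmult_lt_reg_r with (2 * (W + 1))%R. lra.
    unfold Rdiv. rewrite Rmult_assoc, Rinv_l by lra. lra. }
  nra. }
lra.
Qed.

Section Defect.
Variables (N : nat) (g : nat -> nat -> C) (A D : op).
Hypothesis HA : forall u, l2 u -> A u = matop N g u.
Hypothesis HD : is_pos_sqrt A D.

Lemma normD y : l2 y -> (hnorm (D y) ^ 2 = fst (inner (A y) y))%R.
Proof.
intros Hy. destruct HD as [Hl2 [_ [_ [Hsa [_ Hsq]]]]].
rewrite <- inner_self by auto. rewrite <- Hsa by auto. rewrite Hsq by auto. reflexivity.
Qed.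

Lemma Dzero y : l2 y -> fst (inner (A y) y) = 0%R -> D y = vzero.
Proof.
intros Hy H0. destruct HD as [Hl2 _]. apply l2_zero; auto.
rewrite inner_self by auto. rewrite normD; auto.
Qed.

Lemma D_supp u : l2 u -> supp N (D u).
Proof.
intros Hu p Hp. destruct HD as [Hl2 [_ [_ [Hsa _]]]].
assert (Hev : l2 (ev p)) by (apply l2_fin with (S p); apply supp_ev).
assert (E0 : A (ev p) = vzero).
{ rewrite HA by auto. apply functional_extensionality. intros q. unfold matop, vzero.
  destruct (Nat.ltb_spec q N); auto. apply csum_zero. intros r Hr. unfold ev.
  destruct (Nat.eqb_spec r p); try lia. apply injective_projections; simpl; ring. }
assert (E1 : D (ev p) = vzero).
{ apply Dzero; auto. rewrite E0, inner_zero_l. reflexivity. }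
pose proof (Hsa (ev p) u Hev Hu) as E2. rewrite E1, inner_zero_l, inner_ev in E2.
rewrite <- (Cconj_conj (D u p)), <- E2. apply injective_projections; simpl; ring.
Qed.

Lemma D_orth w : supp N w -> fst (Qf N g w) = 0%R -> forall u, l2 u -> inner (D u) w = RtoC 0.
Proof.
intros Hw HQ u Hu. destruct HD as [Hl2 [_ [_ [Hsa _]]]].
assert (Hwl : l2 w) by (apply l2_fin with N; auto).
assert (E : D w = vzero).
{ apply Dzero; auto. rewrite HA, inner_matop_self by auto. auto. }
rewrite Hsa by auto. rewrite E. apply inner_zero_r.
Qed.

Lemma closure_props x : closure (range D) x ->
  supp N x /\ (forall w, supp N w -> fst (Qf N g w) = 0%R -> csum N (fun p => Cmult (x p) (Cconj (w p))) = RtoC 0).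
Proof.
intros [Hx Hc]. destruct HD as [Hl2 _].
split.
- intros p Hp. apply Cmod_eq_0. apply small_zero with 1%R. apply Cmod_ge_0. lra.
  intros eps He. destruct (Hc eps He) as [y [[u [Hu ->]] Hy]].
  assert (Cmod (x p - D u p)%C <= hnorm (vsub x (D u)))%R by (apply (coord_le (vsub x (D u)) p); apply l2_sub; auto).
  rewrite (D_supp u Hu p Hp) in H.
  replace (x p - 0)%C with (x p) in H by (apply injective_projections; simpl; ring). lra.
- intros w Hw HQ. apply Cmod_eq_0.
  apply small_zero with (rsum N (fun p => Cmod (w p))). apply Cmod_ge_0.
  apply rsum_nonneg; intros; apply Cmod_ge_0.
  intros eps He. destruct (Hc eps He) as [y [[u [Hu ->]] Hy]].
  pose proof (D_orth w Hw HQ u Hu) as H0. rewrite (inner_fin_r _ _ N Hw) in H0.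
  assert (E : csum N (fun p => (x p * Cconj (w p))%C) =
     csum N (fun p => (x p * Cconj (w p) - D u p * Cconj (w p))%C)) by (rewrite csum_minus, H0; ring).
  rewrite E.
  eapply Rle_trans. apply cmod_csum. rewrite <- rsum_scal. apply rsum_le. intros p Hp.
  replace (x p * Cconj (w p) - D u p * Cconj (w p))%C with ((x p - D u p) * Cconj (w p))%C by ring.
  rewrite Cmod_mult, Cmod_conj. apply Rmult_le_compat_r. apply Cmod_ge_0.
  assert (Cmod (x p - D u p)%C <= hnorm (vsub x (D u)))%R by (apply (coord_le (vsub x (D u)) p); apply l2_sub; auto).
  lra.
Qed.

End Defect.

Definition indep (d : nat) (v : nat -> vec) : Prop :=
  forall c : nat -> C, vsum d (fun i => vscal (c i) (v i)) = vzero -> forall i, (i < d)%nat -> c i = RtoC 0.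

Lemma rsum_zero_terms N f : (forall i, (i < N)%nat -> (0 <= f i)%R) -> rsum N f = 0%R -> forall i, (i < N)%nat -> f i = 0%R.
Proof. intros H H0 i Hi. pose proof (rsum_term N f i H Hi). pose proof (H i Hi). lra. Qed.

Section Ind.
Local Open Scope C_scope.

Lemma no_indep N m v : (forall i, (i < m)%nat -> supp N (v i)) -> (N < m)%nat -> indep m v -> False.
Proof.
intros Hs Hm Hi.
destruct (CL_dep N (fun i => if Nat.ltb i m then v i else vzero)) as [c [[i0 [Hi0 Hc0]] Hc]].
{ intros i p Hp. destruct (Nat.ltb_spec i m). apply Hs; auto. reflexivity. }
set (c' := fun i => if Nat.leb i N then c i else RtoC 0).
assert (E : vsum m (fun i => vscal (c' i) (v i)) = vzero).
{ apply functional_extensionality; intros p. unfold vsum, vzero.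
  replace m with (S N + (m - S N))%nat by lia. rewrite csum_split.
  rewrite (csum_zero (m - S N)).
  - rewrite Cplus_0_r, <- (Hc p). apply csum_ext. intros i Hi2. unfold vscal, c'.
    destruct (Nat.leb_spec i N); try lia. destruct (Nat.ltb_spec i m); try lia. reflexivity.
  - intros i Hi2. unfold vscal, c'. destruct (Nat.leb_spec (S N + i) N); try lia. ring. }
apply Hc0. pose proof (Hi c' E i0 ltac:(lia)) as H. unfold c' in H.
destruct (Nat.leb_spec i0 N); try lia. auto.
Qed.

Lemma indep_ext1 N m v w : indep m v ->
  (forall i, (i < m)%nat -> csum N (fun p => v i p * Cconj (w p)) = 0) ->
  (exists p, (p < N)%nat /\ w p <> 0) ->
  indep (S m) (fun i => if Nat.ltb i m then v i else w).
Proof.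
intros Hv Ho [p0 [Hp0 Hwp0]] c Hc.
assert (Hpt : forall p, csum m (fun i => c i * v i p) + c m * w p = 0).
{ intros p. pose proof (f_equal (fun f => f p) Hc) as H. unfold vsum, vzero in H. simpl in H.
  rewrite <- H. f_equal.
  - apply csum_ext; intros i Hi; unfold vscal; destruct (Nat.ltb_spec i m); try lia; auto.
  - unfold vscal. destruct (Nat.ltb_spec m m); try lia. auto. }
set (S0 := csum N (fun p => w p * Cconj (w p))).
assert (HS : c m * S0 = 0).
{ transitivity (csum N (fun p => (csum m (fun i => c i * v i p) + c m * w p) * Cconj (w p))).
  - rewrite (csum_ext N _ (fun p => csum m (fun i => c i * (v i p * Cconj (w p))) + c m * (w p * Cconj (w p)))).
    2:{ intros p _. rewrite Cmult_plus_distr_r, <- csum_scal_r. f_equal. apply csum_ext; intros; ring. ring. }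
    rewrite csum_plus, csum_swap, csum_scal_l. rewrite (csum_zero m). fold S0. ring.
    intros i Hi. rewrite csum_scal_l, Ho by auto. ring.
  - apply csum_zero. intros p _. rewrite Hpt. ring. }
assert (HS0 : S0 <> 0).
{ intros E. assert (fst S0 = 0%R) by (rewrite E; reflexivity).
  unfold S0 in H. rewrite re_csum_sq in H.
  pose proof (rsum_term N (fun p => Cmod (w p) ^ 2)%R p0 (fun j _ => cmod2_ge0 (w j)) Hp0).
  assert (0 < Cmod (w p0))%R by (apply Cmod_gt_0; auto). rewrite H in H0. nra. }
assert (Hcm : c m = 0).
{ replace (c m) with (c m * S0 * / S0) by (field; auto). rewrite HS. ring. }
assert (Hv0 : vsum m (fun i => vscal (c i) (v i)) = vzero).
{ apply functional_extensionality; intros p. unfold vsum, vzero. pose proof (Hpt p).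
  rewrite Hcm in H. unfold vscal. rewrite <- H. ring. }
intros i Hi. destruct (Nat.eq_dec i m). subst; auto. apply Hv; auto. lia.
Qed.

Lemma indep_concat N a b v w : indep a v -> indep b w ->
  (forall i j, (i < a)%nat -> (j < b)%nat -> inner (w j) (v i) = 0) ->
  (forall j, (j < b)%nat -> supp N (w j)) ->
  indep (a + b) (fun i => if Nat.ltb i a then v i else w (i - a)%nat).
Proof.
intros Hv Hw Ho Hsw c Hc.
set (s := vsum b (fun j => vscal (c (a + j)%nat) (w j))).
assert (Hpt : forall p, csum a (fun i => c i * v i p) + s p = 0).
{ intros p. pose proof (f_equal (fun f => f p) Hc) as H. unfold vsum, vzero in H.
  rewrite csum_split in H. rewrite <- H. unfold s, vsum. f_equal.
  - apply csum_ext; intros i Hi; unfold vscal; destruct (Nat.ltb_spec i a); try lia; auto.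
  - apply csum_ext; intros j Hj; unfold vscal. destruct (Nat.ltb_spec (a + j) a); try lia.
    replace (a + j - a)%nat with j by lia. auto. }
assert (Hin : forall i, (i < a)%nat -> csum N (fun p => s p * Cconj (v i p)) = 0).
{ intros i Hi. unfold s, vsum, vscal.
  rewrite (csum_ext N _ (fun p => csum b (fun j => c (a + j)%nat * (w j p * Cconj (v i p))))).
  2:{ intros p _. rewrite <- csum_scal_r. apply csum_ext. intros; ring. }
  rewrite csum_swap. apply csum_zero. intros j Hj. rewrite csum_scal_l.
  rewrite <- (inner_fin_l _ _ N) by (apply Hsw; auto). rewrite Ho by auto. ring. }
assert (HS : csum N (fun p => s p * Cconj (s p)) = 0).
{ rewrite (csum_ext N _ (fun p => - csum a (fun i => Cconj (c i) * (s p * Cconj (v i p))))).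
  2:{ intros p _. assert (E : s p = - csum a (fun i => c i * v i p)) by (pose proof (Hpt p); rewrite <- (Cplus_0_l (- _)), <- H; ring).
      rewrite E at 2. rewrite Copp_conj, csum_conj.
      replace (s p * - csum a (fun i => Cconj (c i * v i p))) with (- (s p * csum a (fun i => Cconj (c i * v i p)))) by ring.
      f_equal. rewrite <- csum_scal_l. apply csum_ext. intros i _. rewrite Cmult_conj. ring. }
  rewrite csum_opp, csum_swap. rewrite (csum_zero a). ring.
  intros i Hi. rewrite csum_scal_l, Hin by auto. ring. }
assert (Hs0 : forall p, s p = 0).
{ intros p. destruct (Nat.lt_ge_cases p N).
  - apply Cmod_eq_0. assert (fst (csum N (fun p => s p * Cconj (s p))) = 0%R) by (rewrite HS; reflexivity).
    rewrite re_csum_sq in H0. pose proof (rsum_zero_terms N _ (fun j _ => cmod2_ge0 (s j)) H0 p H).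
    simpl in H1. pose proof (Cmod_ge_0 (s p)). nra.
  - unfold s, vsum. apply csum_zero. intros j Hj. unfold vscal. rewrite (Hsw j Hj p H). ring. }
assert (Hb : forall j, (j < b)%nat -> c (a + j)%nat = 0).
{ apply Hw. apply functional_extensionality. intros p. apply (Hs0 p). }
assert (Ha : forall i, (i < a)%nat -> c i = 0).
{ apply Hv. apply functional_extensionality. intros p. unfold vsum, vzero, vscal.
  pose proof (Hpt p). rewrite Hs0 in H. rewrite <- H. ring. }
intros i Hi. destruct (Nat.lt_ge_cases i a). auto.
replace i with (a + (i - a))%nat by lia. apply Hb. lia.
Qed.

End Ind.

Lemma iter_swap {T} (f : T -> T) r x : Nat.iter r f (f x) = f (Nat.iter r f x).
Proof. induction r; simpl; auto. rewrite IHr. auto. Qed.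

Section Frop.
Variables (n k : nat) (X : nat -> nat -> C).
Local Open Scope C_scope.

Lemma F1op_fun : F1op n k X = F1f n k X.
Proof. apply functional_extensionality. apply F1_eq. Qed.
Lemma Top_fun : Top n k X = Tf n k X.
Proof. apply functional_extensionality. apply T_eq. Qed.

Lemma F1_local (Y Y' : vec) : (forall q, (q < n)%nat -> Y q = Y' q) -> F1f n k X Y = F1f n k X Y'.
Proof.
intros H. apply functional_extensionality. intros p. unfold F1f.
destruct (Nat.ltb_spec p (n + k)); auto. apply csum_ext. intros i Hi. rewrite H; auto.
Qed.

Lemma iterSk_below j (w : vec) : (forall q, (q < n)%nat -> w q = 0) -> forall q, (q < n)%nat -> Nat.iter j (Sk k) w q = 0.
Proof.
intros H. induction j as [|j IH]; intros q Hq. apply H; auto.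
change (Nat.iter (S j) (Sk k) w q) with (Sk k (Nat.iter j (Sk k) w) q). unfold Sk.
destruct (Nat.ltb_spec q k); auto. apply IH. lia.
Qed.

Lemma Sk_vadd (a b : vec) : Sk k (vadd a b) = vadd (Sk k a) (Sk k b).
Proof.
apply functional_extensionality. intros p. unfold Sk, vadd. destruct (Nat.ltb_spec p k); auto. ring.
Qed.

Lemma Sk_vsum m (f : nat -> vec) : Sk k (vsum m f) = vsum m (fun i => Sk k (f i)).
Proof.
apply functional_extensionality. intros p. unfold Sk, vsum. destruct (Nat.ltb_spec p k); auto.
symmetry. apply csum_zero. intros; auto.
Qed.

Definition Wv (u : vec) m := vsub (Nat.iter m (F1f n k X) u) (Pj n (Nat.iter m (F1f n k X) u)).
Definition Zv (u : vec) r := vsum (r - 1) (fun j => Nat.iter (S j) (Sk k) (Wv u (r - S j))).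

Lemma Wv_below u m q : (q < n)%nat -> Wv u m q = 0.
Proof. intros Hq. unfold Wv, vsub, Pj. destruct (Nat.ltb_spec q n); try lia. ring. Qed.

Lemma Zv_below u r q : (q < n)%nat -> Zv u r q = 0.
Proof.
intros Hq. unfold Zv, vsum. apply csum_zero. intros j _. apply iterSk_below; auto.
intros; apply Wv_below; auto.
Qed.

Lemma Frop_Zv r u : Frop n k X r u = vadd (Nat.iter r (F1f n k X) u) (Zv u r).
Proof. unfold Frop, Zv, Wv. rewrite F1op_fun. reflexivity. Qed.

Lemma Zv_succ u r : (1 <= r)%nat -> Zv u (S r) = vadd (Sk k (Wv u r)) (Sk k (Zv u r)).
Proof.
intros Hr. apply functional_extensionality. intros p.
unfold Zv at 1. unfold vsum. simpl (S r - 1)%nat. rewrite Nat.sub_0_r.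
replace r with (1 + (r - 1))%nat at 1 by lia. rewrite csum_split. simpl csum at 1.
unfold vadd. rewrite Cplus_0_l, Nat.sub_0_r. f_equal.
unfold Zv. rewrite Sk_vsum. unfold vsum. apply csum_ext. intros i Hi. reflexivity.
Qed.

Lemma Frop_succ r u : (1 <= r)%nat -> Frop n k X (S r) u = Tf n k X (Frop n k X r u).
Proof.
intros Hr. rewrite !Frop_Zv. rewrite T_decomp.
set (Y := vadd (Nat.iter r (F1f n k X) u) (Zv u r)).
assert (E1 : F1f n k X Y = Nat.iter (S r) (F1f n k X) u).
{ change (Nat.iter (S r) (F1f n k X) u) with (F1f n k X (Nat.iter r (F1f n k X) u)).
  apply F1_local. intros q Hq. unfold Y, vadd. rewrite Zv_below by auto. apply Cplus_0_r. }
assert (E2 : vsub Y (Pj n Y) = vadd (Wv u r) (Zv u r)).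
{ apply functional_extensionality. intros p. unfold Y, Wv, vsub, vadd, Pj.
  destruct (Nat.ltb_spec p n).
  - rewrite Zv_below by auto. ring.
  - ring. }
rewrite E1, E2, Sk_vadd, Zv_succ by auto. reflexivity.
Qed.

Lemma Frop_eq r u : (1 <= r)%nat -> Frop n k X r u = Nat.iter r (Tf n k X) (Pj n u).
Proof.
intros Hr. induction r. lia.
destruct r.
- simpl. rewrite T_decomp, F1_Pj. unfold Frop. simpl. rewrite F1op_fun.
  apply functional_extensionality. intros p. unfold vadd, vsum, Sk, vsub, Pj. simpl.
  destruct (Nat.ltb_spec p k); try ring. destruct (Nat.ltb_spec (p - k) n); ring.
- rewrite Frop_succ by lia. rewrite IHr by lia. reflexivity.
Qed.

End Frop.

Section Strict.
Variables (n k : nat) (X : nat -> nat -> C).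
Hypothesis Hc : contraction (Top n k X).
Local Open Scope C_scope.

Lemma HD_T : is_pos_sqrt (fun u => vsub u (adj (Top n k X) (Top n k X u)))
                         (defect_op (Top n k X)).
Proof.
apply (pos_sqrt_exists _ n (Gm n k X)). apply herm_Gm. apply psd_Gm; auto.
intros u Hu. apply AT_eq; auto.
Qed.

Lemma HD_Ts : is_pos_sqrt (fun u => vsub u (Top n k X (adj (Top n k X) u)))
                         (defect_op_star (Top n k X)).
Proof.
apply (pos_sqrt_exists _ (n + k) (Gs n X)). apply herm_Gs. apply psd_Gs; auto.
intros u Hu. apply AsT_eq; auto.
Qed.

Lemma DT_props x : defect_sp (Top n k X) x ->
  supp n x /\ (forall w, supp n w -> fst (Qf n (Gm n k X) w) = 0%R ->
     csum n (fun p => x p * Cconj (w p)) = 0).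
Proof.
intros H. apply (closure_props n (Gm n k X) _ _ (fun u Hu => AT_eq n k X u Hu) HD_T x H).
Qed.

Lemma DTs_props x : defect_sp_star (Top n k X) x ->
  supp (n + k) x /\ (forall w, supp (n + k) w -> fst (Qf (n + k) (Gs n X) w) = 0%R ->
     csum (n + k) (fun p => x p * Cconj (w p)) = 0).
Proof.
intros H. apply (closure_props (n + k) (Gs n X) _ _ (fun u Hu => AsT_eq n k X u Hu) HD_Ts x H).
Qed.

Lemma strictA : has_dim (defect_sp (Top n k X)) n ->
  forall w, supp n w -> fst (Qf n (Gm n k X) w) = 0%R -> forall p, w p = 0.
Proof.
intros Hd w Hw HQ p.
destruct (classic (exists p, (p < n)%nat /\ w p <> 0)) as [Hex|Hno].
- exfalso. destruct Hd as [v [Hin [Hind _]]].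
  assert (Hi1 : indep (S n) (fun i => if Nat.ltb i n then v i else w)).
  { apply (indep_ext1 n n v w); auto.
    intros i Hi. apply (proj2 (DT_props (v i) (Hin i Hi))); auto. }
  apply (no_indep n (S n) (fun i => if Nat.ltb i n then v i else w)); auto.
  intros i Hi. destruct (Nat.ltb_spec i n); auto. apply (proj1 (DT_props (v i) (Hin i H))).
- destruct (Nat.lt_ge_cases p n).
  + destruct (classic (w p = 0)); auto. exfalso. apply Hno. exists p; auto.
  + apply Hw; auto.
Qed.

Lemma strictB : subsp (defect_sp (Top n k X)) (defect_sp_star (Top n k X)) ->
  has_dim (defect_sp (Top n k X)) n ->
  has_dim (ominus (defect_sp_star (Top n k X)) (defect_sp (Top n k X))) k ->
  forall y, supp (n + k) y -> fst (Qf (n + k) (Gs n X) y) = 0%R -> forall p, y p = 0.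
Proof.
intros Hsub Hd Hom y Hy HQ p.
destruct (classic (exists p, (p < n + k)%nat /\ y p <> 0)) as [Hex|Hno].
- exfalso. destruct Hd as [v [Hin [Hind _]]]. destruct Hom as [w [Hwin [Hwind _]]].
  set (fam := fun i => if Nat.ltb i n then v i else w (i - n)%nat).
  assert (Hfam : forall i, (i < n + k)%nat -> defect_sp_star (Top n k X) (fam i)).
  { intros i Hi. unfold fam. destruct (Nat.ltb_spec i n).
    - apply Hsub. apply Hin; auto.
    - apply (proj1 (Hwin (i - n)%nat ltac:(lia))). }
  assert (Hi0 : indep (n + k) fam).
  { apply (indep_concat (n + k) n k v w); auto.
    - intros i j Hi Hj. apply (proj2 (Hwin j Hj)). apply Hin; auto.
    - intros j Hj. apply (proj1 (DTs_props (w j) (proj1 (Hwin j Hj)))). }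
  assert (Hi1 : indep (S (n + k)) (fun i => if Nat.ltb i (n + k) then fam i else y)).
  { apply (indep_ext1 (n + k) (n + k) fam y); auto.
    intros i Hi. apply (proj2 (DTs_props (fam i) (Hfam i Hi))); auto. }
  apply (no_indep (n + k) (S (n + k)) (fun i => if Nat.ltb i (n + k) then fam i else y)); auto.
  intros i Hi. destruct (Nat.ltb_spec i (n + k)); auto.
  apply (proj1 (DTs_props (fam i) (Hfam i H))).
- destruct (Nat.lt_ge_cases p (n + k)).
  + destruct (classic (y p = 0)); auto. exfalso. apply Hno. exists p; auto.
  + apply Hy; auto.
Qed.

End Strict.

Section Fin.
Variables (n k : nat) (X : nat -> nat -> C).
Local Open Scope C_scope.

Lemma l2_iter_Tf r w : l2 w -> l2 (Nat.iter r (Tf n k X) w).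
Proof. intros H. induction r; simpl; auto. apply l2_Tf; auto. Qed.

Lemma l2_iter_Tsf r w : l2 w -> l2 (Nat.iter r (Tsf n k X) w).
Proof. intros H. induction r; simpl; auto. apply l2_Tsf; auto. Qed.

Lemma iter_adj r w v : l2 w -> l2 v ->
  inner (Nat.iter r (Tf n k X) w) v = inner w (Nat.iter r (Tsf n k X) v).
Proof.
intros Hw. revert v. induction r; intros v Hv; simpl; auto.
pose proof (proj2 (adj_T n k X)) as Ha. rewrite Top_fun in Ha.
rewrite Ha by (auto; apply l2_iter_Tf; auto).
rewrite IHr by (apply l2_Tsf; auto). rewrite iter_swap. reflexivity.
Qed.

Lemma Pj_sym j u z : inner (Pj j u) z = inner u (Pj j z).
Proof.
rewrite (inner_fin_l _ _ j) by apply supp_Pj. rewrite (inner_fin_r _ _ j) by apply supp_Pj.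
apply csum_ext. intros p Hp. unfold Pj. destruct (Nat.ltb_spec p j); auto; lia.
Qed.

Lemma adj_Frop r : (1 <= r)%nat -> is_adjoint (Frop n k X r) (fun v => Pj n (Nat.iter r (Tsf n k X) v)).
Proof.
intros Hr. split.
- intros u _. apply l2_fin with n. apply supp_Pj.
- intros u v Hu Hv. rewrite Frop_eq by auto. rewrite iter_adj.
  apply Pj_sym. apply l2_fin with n; apply supp_Pj. auto.
Qed.

Lemma Tsf_local N (v v' : vec) : (n <= N)%nat -> (forall q, (q < N + k)%nat -> v q = v' q) ->
  forall i, (i < N)%nat -> Tsf n k X v i = Tsf n k X v' i.
Proof.
intros HN H i Hi. unfold Tsf. destruct (Nat.ltb_spec i n).
- apply csum_ext. intros p Hp. rewrite H; auto. lia.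
- apply H. lia.
Qed.

Lemma iter_local r : forall N (v v' : vec), (n <= N)%nat -> (forall q, (q < N + k * r)%nat -> v q = v' q) ->
  forall i, (i < N)%nat -> Nat.iter r (Tsf n k X) v i = Nat.iter r (Tsf n k X) v' i.
Proof.
induction r; intros N v v' HN H i Hi.
- simpl. apply H. lia.
- change (Tsf n k X (Nat.iter r (Tsf n k X) v) i = Tsf n k X (Nat.iter r (Tsf n k X) v') i).
  apply Tsf_local with N; auto. intros q Hq. apply IHr with (N + k)%nat; auto. lia.
  intros q' Hq'. apply H. nia.
Qed.

Hypothesis Hc : contraction (Top n k X).

Lemma contr_iter r w : l2 w -> (hnorm (Nat.iter r (Tf n k X) w) <= hnorm w)%R.
Proof.
intros Hw. induction r; simpl. lra.
destruct Hc as [_ [_ Hn]]. rewrite Top_fun in Hn.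
eapply Rle_trans; [apply Hn; apply l2_iter_Tf; auto | auto].
Qed.

Lemma Tsf_fin N z : (n + k <= N)%nat -> supp N z ->
  supp N (Tsf n k X z) /\
  (rsum N (fun p => Cmod (Tsf n k X z p) ^ 2) <= rsum N (fun p => Cmod (z p) ^ 2))%R.
Proof.
intros HN Hz. split.
- intros i Hi. unfold Tsf. destruct (Nat.ltb_spec i n); try lia. apply Hz. lia.
- pose proof (psd_Gs n k X Hc z) as Hp. rewrite Qf_Gs, re_minus, !re_csum_sq in Hp.
  replace N with (n + (N - n))%nat at 1 by lia. rewrite rsum_split.
  replace N with (n + k + (N - n - k))%nat at 2 by lia. rewrite rsum_split.
  rewrite (rsum_ext n _ (fun p => Cmod (F1sf n k X z p) ^ 2)%R).
  2:{ intros i Hi. unfold Tsf, F1sf. destruct (Nat.ltb_spec i n); try lia. auto. }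
  replace (N - n)%nat with (N - n - k + k)%nat by lia. rewrite rsum_split.
  rewrite (rsum_zero k).
  2:{ intros j Hj. unfold Tsf. destruct (Nat.ltb_spec (n + (N - n - k + j)) n); try lia.
      rewrite Hz by lia. rewrite Cmod_0. ring. }
  rewrite (rsum_ext (N - n - k) (fun i => Cmod (Tsf n k X z (n + i)%nat) ^ 2)%R
             (fun i => Cmod (z (n + k + i)%nat) ^ 2)%R).
  2:{ intros j Hj. unfold Tsf. destruct (Nat.ltb_spec (n + j) n); try lia.
      replace (n + j + k)%nat with (n + k + j)%nat by lia. auto. }
  replace (N - n - k + k - k)%nat with (N - n - k)%nat by lia. lra.
Qed.

Lemma iter_fin r N z : (n + k <= N)%nat -> supp N z ->
  supp N (Nat.iter r (Tsf n k X) z) /\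
  (rsum N (fun p => Cmod (Nat.iter r (Tsf n k X) z p) ^ 2) <= rsum N (fun p => Cmod (z p) ^ 2))%R.
Proof.
intros HN Hz. induction r as [|r [H1 H2]].
- split; [exact Hz | apply Rle_refl].
- destruct (Tsf_fin N _ HN H1) as [H3 H4]. split; [exact H3 | eapply Rle_trans; [exact H4 | exact H2]].
Qed.

End Fin.

Lemma matop_basis N g (c : vec) : vsum N (fun i => vscal (c i) (matop N g (ev i))) = matop N g c.
Proof.
apply functional_extensionality. intros p. unfold vsum, vscal, matop.
destruct (Nat.ltb_spec p N).
- apply csum_ext. intros i Hi.
  rewrite (csum_ext N _ (fun q => if Nat.eqb q i then g p q else RtoC 0)).
  2:{ intros q Hq. unfold ev. destruct (Nat.eqb q i); apply injective_projections; simpl; ring. }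
  rewrite csum_delta by auto. apply Cmult_comm.
- apply csum_zero. intros i _. apply Cmult_0_r.
Qed.

Lemma re_conj_mul z : fst (Cmult (Cconj z) z) = (Cmod z ^ 2)%R.
Proof. rewrite cmod2. simpl. ring. Qed.

Section Final.
Variables (n k : nat) (X : nat -> nat -> C).
Hypothesis hk : (1 <= k)%nat.
Hypothesis Hc : contraction (Top n k X).
Hypothesis Hsub : subsp (defect_sp (Top n k X)) (defect_sp_star (Top n k X)).
Hypothesis HdT : has_dim (defect_sp (Top n k X)) n.
Hypothesis Hom : has_dim (ominus (defect_sp_star (Top n k X)) (defect_sp (Top n k X))) k.

Lemma adjF1_eq x : l2 x -> adj (F1op n k X) x = F1sf n k X x.
Proof. intros Hx. apply (adj_unique _ _ (adj_F1 n k X)); auto. Qed.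

Lemma f1_eq u : l2 u -> vsub (Pj n u) (adj (F1op n k X) (F1op n k X u)) = matop n (Gm n k X) u.
Proof.
intros Hu. rewrite adjF1_eq by (rewrite F1_eq; apply (l2_fin _ (n + k)); apply supp_F1).
rewrite F1_eq. apply functional_extensionality. intros p. unfold vsub, Pj, matop.
destruct (Nat.ltb_spec p n).
- rewrite Gm_row by auto. unfold F1sf. destruct (Nat.ltb_spec p n); try lia. reflexivity.
- unfold F1sf. destruct (Nat.ltb_spec p n); try lia. apply injective_projections; simpl; ring.
Qed.

Lemma part1 : has_dim (range (fun u => vsub (Pj n u) (adj (F1op n k X) (F1op n k X u)))) n.
Proof.
exists (fun i => matop n (Gm n k X) (ev i)). split; [|split].
- intros i Hi. exists (ev i). split. apply (l2_fin _ (S i)); apply supp_ev.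
  rewrite f1_eq; auto. apply (l2_fin _ (S i)); apply supp_ev.
- intros c Hcz i Hi. rewrite matop_basis in Hcz.
  set (w := Pj n c).
  assert (Ew : matop n (Gm n k X) w = vzero).
  { rewrite <- Hcz. apply functional_extensionality. intros p. unfold matop.
    destruct (Nat.ltb_spec p n); auto. apply csum_ext. intros q Hq. unfold w, Pj.
    destruct (Nat.ltb_spec q n); auto; lia. }
  assert (HQ : fst (Qf n (Gm n k X) w) = 0%R).
  { rewrite <- inner_matop_self, Ew, inner_zero_l. reflexivity. }
  pose proof (strictA n k X Hc HdT w (supp_Pj n c) HQ i) as H.
  unfold w, Pj in H. destruct (Nat.ltb_spec i n); auto; lia.
- intros y [u [Hu ->]]. exists u. rewrite f1_eq by auto. symmetry. apply matop_basis.
Qed.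

Lemma part2 u : F1op n k X (vsub u (Pj n u)) = vzero /\
     vsub (F1op n k X u) (Pj (n + k) (F1op n k X u)) = vzero.
Proof.
rewrite !F1_eq. split.
- apply functional_extensionality. intros p. unfold F1f, vzero.
  destruct (Nat.ltb_spec p (n + k)); auto. apply csum_zero. intros i Hi.
  unfold vsub, Pj. destruct (Nat.ltb_spec i n); try lia. apply injective_projections; simpl; ring.
- apply functional_extensionality. intros p. unfold vsub, Pj, vzero.
  destruct (Nat.ltb_spec p (n + k)). apply injective_projections; simpl; ring.
  rewrite (supp_F1 n k X u p) by lia. apply injective_projections; simpl; ring.
Qed.

Lemma defB u : fst (Qf (n + k) (Gs n X) u) = 0%R -> forall p, (p < n + k)%nat -> u p = RtoC 0.
Proof.
intros HQ p Hp.
pose proof (strictB n k X Hc Hsub HdT Hom (Pj (n + k) u) (supp_Pj (n + k) u)) as H.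
rewrite (Qf_ext (n + k) _ _ u) in H.
2:{ intros q Hq. unfold Pj. destruct (Nat.ltb_spec q (n + k)); auto; lia. }
specialize (H HQ p). unfold Pj in H. destruct (Nat.ltb_spec p (n + k)); auto; lia.
Qed.

Lemma part3 : exists lam : R, (0 <= lam)%R /\
     forall x, l2 x ->
       (lam * hnorm (adj (F1op n k X) x) ^ 2 - hnorm (F1op n k X x) ^ 2
        <= lam * hnorm (Pj (n + k) x) ^ 2 - hnorm (Pj n x) ^ 2)%R.
Proof.
destruct (CL_pd (n + k) (Gs n X) (herm_Gs n k X) (psd_Gs n k X Hc) defB) as [c [Hc0 Hcb]].
exists (/ c)%R. split. left. apply Rinv_0_lt_compat; auto.
intros x Hx. rewrite adjF1_eq by auto. rewrite F1_eq.
rewrite (hnorm2_fin n _ (supp_F1s n k X x)).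
rewrite (hnorm2_fin (n + k) _ (supp_F1 n k X x)).
rewrite (hnorm2_fin (n + k) _ (supp_Pj (n + k) x)).
rewrite (hnorm2_fin n _ (supp_Pj n x)).
rewrite (rsum_ext (n + k) (fun p => Cmod (Pj (n + k) x p) ^ 2)%R (fun p => Cmod (x p) ^ 2)%R).
2:{ intros p Hp. unfold Pj. destruct (Nat.ltb_spec p (n + k)); auto; lia. }
rewrite (rsum_ext n (fun p => Cmod (Pj n x p) ^ 2)%R (fun p => Cmod (x p) ^ 2)%R).
2:{ intros p Hp. unfold Pj. destruct (Nat.ltb_spec p n); auto; lia. }
specialize (Hcb x). rewrite Qf_Gs, re_minus, !re_csum_sq in Hcb.
rewrite (rsum_ext (n + k) (fun p => fst (Cmult (Cconj (x p)) (x p))) (fun p => Cmod (x p) ^ 2)%R) in Hcb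
  by (intros; apply re_conj_mul).
set (d := rsum (n + k) (fun p => Cmod (x p) ^ 2)%R) in *.
set (a := rsum n (fun p => Cmod (F1sf n k X x p) ^ 2)%R) in *.
set (b := rsum (n + k) (fun p => Cmod (F1f n k X x p) ^ 2)%R).
set (e := rsum n (fun p => Cmod (x p) ^ 2)%R).
assert (Hb : (0 <= b)%R) by apply rsum_sq_ge0.
assert (He : (e <= d)%R) by (apply rsum_mono; [lia | intros; apply cmod2_ge0]).
assert (H1 : (d <= / c * (d - a))%R).
{ replace d with (/ c * (c * d))%R at 1 by (field; lra).
  apply Rmult_le_compat_l. left. apply Rinv_0_lt_compat; auto. lra. }
nra.
Qed.

Lemma part4a r x : (1 <= r)%nat -> l2 x ->
     (hnorm (Frop n k X r x) <= hnorm (Pj n x))%R /\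
     (hnorm (adj (Frop n k X r) x) <= hnorm (Pj (n + k * r) x))%R.
Proof.
intros Hr Hx. split.
- rewrite Frop_eq by auto. apply contr_iter; auto. apply (l2_fin _ n); apply supp_Pj.
- rewrite (adj_unique _ _ (adj_Frop n k X r Hr)) by auto.
  set (N := (n + k * r)%nat). set (y := Pj N x).
  assert (E : Pj n (Nat.iter r (Tsf n k X) x) = Pj n (Nat.iter r (Tsf n k X) y)).
  { apply functional_extensionality. intros p. unfold Pj. destruct (Nat.ltb_spec p n); auto.
    apply iter_local with n; auto. intros q Hq. unfold y, Pj. destruct (Nat.ltb_spec q N); auto. unfold N in *. lia. }
  rewrite E. assert (HN : (n + k <= N)%nat) by (unfold N; nia).
  destruct (iter_fin n k X Hc r N y HN (supp_Pj N x)) as [Hs Hle].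
  rewrite (hnorm_fin _ n (supp_Pj n _)). rewrite (hnorm_fin y N (supp_Pj N x)).
  apply sqrt_le_1_alt.
  rewrite (rsum_ext n (fun p => Cmod (Pj n (Nat.iter r (Tsf n k X) y) p) ^ 2)%R
            (fun p => Cmod (Nat.iter r (Tsf n k X) y p) ^ 2)%R).
  2:{ intros p Hp. unfold Pj. destruct (Nat.ltb_spec p n); auto; lia. }
  eapply Rle_trans; [|exact Hle]. apply rsum_mono. unfold N; lia. intros; apply cmod2_ge0.
Qed.


Lemma shift_iter r (x : vec) : (forall q, (q < n + k * r)%nat -> (1 <= r)%nat -> x q = RtoC 0) ->
  forall j, (j <= r)%nat -> Nat.iter j (Tsf n k X) x = fun i => x (i + k * j)%nat.
Proof.
intros Hx j. induction j; intros Hj.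
- apply functional_extensionality. intros i. rewrite Nat.mul_0_r, Nat.add_0_r. reflexivity.
- change (Nat.iter (S j) (Tsf n k X) x) with (Tsf n k X (Nat.iter j (Tsf n k X) x)).
  rewrite IHj by lia. apply functional_extensionality. intros i. unfold Tsf.
  destruct (Nat.ltb_spec i n).
  + rewrite (Hx (i + k * S j)%nat) by nia. apply csum_zero. intros p Hp.
    rewrite Hx by nia. apply Cmult_0_r.
  + f_equal. rewrite Nat.mul_succ_r. lia.
Qed.

Lemma step r (x : vec) : l2 x -> (forall q, (q < n + k * r)%nat -> (1 <= r)%nat -> x q = RtoC 0) ->
  hnorm (adj (Frop n k X (S r)) x) = hnorm (Pj (n + k * S r) x) ->
  forall q, (q < n + k * S r)%nat -> x q = RtoC 0.
Proof.
intros Hl Hx Heq.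
rewrite (adj_unique _ _ (adj_Frop n k X (S r) ltac:(lia))) in Heq by auto.
change (Nat.iter (S r) (Tsf n k X) x) with (Tsf n k X (Nat.iter r (Tsf n k X) x)) in Heq.
rewrite (shift_iter r x Hx r (le_n r)) in Heq.
set (y := fun i => x (i + k * r)%nat) in *.
assert (E : Pj n (Tsf n k X y) = F1sf n k X y).
{ apply functional_extensionality. intros p. unfold Pj, Tsf, F1sf. destruct (Nat.ltb_spec p n); auto. }
rewrite E in Heq.
assert (E2 : (hnorm (F1sf n k X y) ^ 2 = hnorm (Pj (n + k * S r) x) ^ 2)%R) by (rewrite Heq; auto).
rewrite (hnorm2_fin n _ (supp_F1s n k X y)), (hnorm2_fin _ _ (supp_Pj _ x)) in E2.
replace (n + k * S r)%nat with (k * r + (n + k))%nat in E2 by (rewrite Nat.mul_succ_r; lia).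
rewrite rsum_split in E2.
rewrite (rsum_zero (k * r)) in E2.
2:{ intros q Hq. unfold Pj. destruct (Nat.ltb_spec q (k * r + (n + k))); try lia.
    rewrite Hx by nia. rewrite Cmod_0. ring. }
rewrite (rsum_ext (n + k) _ (fun j => Cmod (y j) ^ 2)%R) in E2.
2:{ intros j Hj. unfold Pj, y. destruct (Nat.ltb_spec (k * r + j) (k * r + (n + k))); try lia.
    rewrite Nat.add_comm. reflexivity. }
assert (HQ : fst (Qf (n + k) (Gs n X) y) = 0%R) by (rewrite Qf_Gs, re_minus, !re_csum_sq; lra).
pose proof (defB y HQ) as Hy.
intros q Hq. destruct (Nat.lt_ge_cases q (k * r)).
- apply Hx; nia.
- pose proof (Hy (q - k * r)%nat ltac:(rewrite Nat.mul_succ_r in Hq; lia)) as H1.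
  unfold y in H1. replace (q - k * r + k * r)%nat with q in H1 by lia. auto.
Qed.

Lemma part4b x : l2 x ->
  (forall r, (1 <= r)%nat ->
        hnorm (Frop n k X r x) = hnorm (Pj n x) /\
        hnorm (adj (Frop n k X r) x) = hnorm (Pj (n + k * r) x)) -> x = vzero.
Proof.
intros Hl H.
assert (A0 : forall r q, (q < n + k * S r)%nat -> x q = RtoC 0).
{ induction r.
  - apply (step 0%nat x Hl). intros; lia. apply (H 1%nat); lia.
  - apply (step (S r) x Hl). intros q Hq _; apply IHr; auto. apply (H (S (S r))); lia. }
apply functional_extensionality. intros q. apply (A0 q). nia.
Qed.

End Final.

Theorem proposition3p1 (n k : nat) (X : nat -> nat -> C) :
  (1 <= k)%nat ->
  contraction (Top n k X) ->
  cnu (Top n k X) ->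
  (exists d, has_dim (defect_sp (Top n k X)) d) ->
  (exists d, has_dim (defect_sp_star (Top n k X)) d) ->
  subsp (defect_sp (Top n k X)) (defect_sp_star (Top n k X)) ->
  has_dim (defect_sp (Top n k X)) n ->
  has_dim (ominus (defect_sp_star (Top n k X)) (defect_sp (Top n k X))) k ->
  (* (1) *)
  has_dim (range (fun u => vsub (Pj n u) (adj (F1op n k X) (F1op n k X u)))) n /\
  (* (2) *)
  (forall u, l2 u ->
     F1op n k X (vsub u (Pj n u)) = vzero /\
     vsub (F1op n k X u) (Pj (n + k) (F1op n k X u)) = vzero) /\
  (* (3) *)
  (exists lam : R, (0 <= lam)%R /\
     forall x, l2 x ->
       (lam * hnorm (adj (F1op n k X) x) ^ 2 - hnorm (F1op n k X x) ^ 2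
        <= lam * hnorm (Pj (n + k) x) ^ 2 - hnorm (Pj n x) ^ 2)%R) /\
  (* (4) *)
  (forall r x, (1 <= r)%nat -> l2 x ->
     (hnorm (Frop n k X r x) <= hnorm (Pj n x))%R /\
     (hnorm (adj (Frop n k X r) x) <= hnorm (Pj (n + k * r) x))%R) /\
  (forall x, l2 x ->
     (forall r, (1 <= r)%nat ->
        hnorm (Frop n k X r x) = hnorm (Pj n x) /\
        hnorm (adj (Frop n k X r) x) = hnorm (Pj (n + k * r) x)) ->
     x = vzero).
Proof.
intros hk Hc _ _ _ Hsub HdT Hom.
split; [|split; [|split; [|split]]].
- apply part1; auto.
- intros u _. eapply part2; eauto.
- eapply part3; eauto.
- intros r x Hr Hx. apply part4a; auto.
- intros x Hx H. eapply part4b; eauto.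
Qed.
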